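(* For $\alpha=(\alpha_0,\alpha_1,\alpha_2)\in\mathbb N^3$ and $a,b>0$ with $a\ne b$, $$\mathfrak H_\alpha(a,b)=(-1)^{|\alpha|+1}[1^{\alpha_0+1},a^{\alpha_1+1},b^{\alpha_2+1}]\log=(-1)^{|\alpha|+1}[1^{\alpha_0},a^{\alpha_1+1},b^{\alpha_2+1}]\mathcal L_0=\frac{(-1)^{|\alpha|+\alpha_0+1}}{\alpha_1!\,\alpha_2!}\,\partial_a^{\alpha_1}\partial_b^{\alpha_2}\frac{\mathcal L_{\alpha_0}(b)-\mathcal L_{\alpha_0}(a)}{b-a}.$$ In particular $\mathfrak H_{(r,0,0)}(a,b)=-\frac{\mathcal L_r(b)-\mathcal L_r(a)}{b-a}$ for $r\in\mathbb N$.
   Context: $\mathfrak H_\alpha(a,b):=\int_0^\infty x^{|\alpha|+1}(1+x)^{-\alpha_0-1}(1+ax)^{-\alpha_1-1}(1+bx)^{-\alpha_2-1}\,dx$ for $a,b>0$, $|\alpha|=\alpha_0+\alpha_1+\alpha_2$. $\mathcal L_0(s)=\frac{\log s}{s-1}$ and for $r\in\mathbb N$, $\mathcal L_r(s):=(-1)^r[1^{r+1},s]\log$ (the ''modified logarithm''). Divided differences: for $f$ smooth on an open interval, $[y_0]f=f(y_0)$, $[y_0,\dots,y_n]f=\int_{\{t\ge0,\sum t_j=1\}}f^{(n)}(\sum t_jy_j)\,dt_1\cdots dt_n$, defined also for repeated arguments; $[1^k,a^l,b^q]f$ denotes the divided difference with $k$ arguments $1$, $l$ arguments $a$, $q$ arguments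 $b$. *)

(* Defs.v *)
From Stdlib Require Import Reals Lra List Classical ClassicalEpsilon.
Import ListNotations.
Open Scope R_scope.

(* Total Riemann integral on [a,b]: the Riemann integral when f is Riemann
   integrable on [a,b], and 0 otherwise (never used in that case below). *)
Definition Rint (f : R -> R) (a b : R) : R :=
  match excluded_middle_informative (inhabited (Riemann_integrable f a b)) with
  | left h => RiemannInt (epsilon h (fun _ => True))
  | right _ => 0
  end.

Definition improper_int0 (f : R -> R) (L : R) : Prop :=
  (forall T, 0 <= T -> inhabited (Riemann_integrable f 0 T)) /\
  (forall eps, eps > 0 -> exists M, forall T, T >= M ->
      Rabs (Rint f 0 T - L) < eps).

Definition Deriv (f : R -> R) (x : R) : R :=
  epsilon (inhabits 0) (fun l => derivable_pt_lim f x l).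

Fixpoint Dn (n : nat) (f : R -> R) : R -> R :=
  match n with
  | O => f
  | S m => fun x => Deriv (Dn m f) x
  end.

(* Iterated integral over the standard simplex:
   sint y0 [y1;..;yn] F acc mass
     = int_0^mass dt1 int_0^(mass-t1) dt2 ... F(acc + t1 y1 + ... + tn yn + t0 y0)
   with t0 = mass - t1 - ... - tn. *)
Fixpoint sint (y0 : R) (ys : list R) (F : R -> R) (acc mass : R) : R :=
  match ys with
  | nil => F (acc + mass * y0)
  | y :: ys' => Rint (fun t => sint y0 ys' F (acc + t * y) (mass - t)) 0 mass
  end.

(* Divided difference [y0,...,yn] f via the Hermite-Genocchi simplex integral
   int_{t>=0, sum t_j = 1} f^(n)(sum t_j y_j) dt1...dtn. *)
Definition dd (ys : list R) (f : R -> R) : R :=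
  match ys with
  | nil => 0
  | y0 :: ys' => sint y0 ys' (Dn (length ys') f) 0 1
  end.

Definition pts (k : nat) (a : R) (l : nat) (b : R) (q : nat) : list R :=
  repeat 1 k ++ repeat a l ++ repeat b q.

(* L_0(s) = log s / (s - 1), extended by continuity (value 1) at s = 1. *)
Definition L0 (s : R) : R := if Req_EM_T s 1 then 1 else ln s / (s - 1).

Definition Lmod (r : nat) (s : R) : R := (-1) ^ r * dd (repeat 1 (S r) ++ [s]) ln.

Definition Hint (a0 a1 a2 : nat) (a b : R) (x : R) : R :=
  x ^ (a0 + a1 + a2 + 1) / ((1 + x) ^ (a0 + 1) * (1 + a * x) ^ (a1 + 1)
                              * (1 + b * x) ^ (a2 + 1)).

(* Main.v *)
Require Import Defs.
From Stdlib Require Import Reals List Factorial.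
From Stdlib Require Import Lra Lia Classical ClassicalEpsilon.
From Coquelicot Require Import Coquelicot.
Import ListNotations.
Open Scope R_scope.

Lemma Rint_RInt f a b : ex_RInt f a b -> Rint f a b = RInt f a b.
Proof.
  intros H. unfold Rint. destruct excluded_middle_informative as [h|h].
  - rewrite (RInt_Reals f a b (epsilon h (fun _ => True))). reflexivity.
  - exfalso. apply h. constructor. now apply ex_RInt_Reals_0.
Qed.

Definition clampR a b t := Rmax a (Rmin b t).

Lemma clampR_lip a b x y : Rabs (clampR a b x - clampR a b y) <= Rabs (x - y).
Proof.
  unfold clampR, Rmax, Rmin.
  repeat destruct Rle_dec; unfold Rabs; repeat destruct Rcase_abs; lra.
Qed.

Lemma clampR_in a b x : a <= b -> a <= clampR a b x <= b.
Proof. intros. unfold clampR, Rmax, Rmin. repeat destruct Rle_dec; lra. Qed.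

Lemma clampR_id a b x : a <= x <= b -> clampR a b x = x.
Proof. intros. unfold clampR, Rmax, Rmin. repeat destruct Rle_dec; lra. Qed.

Lemma lip_cont f K x : 0 <= K -> (forall u v, Rabs (f u - f v) <= K * Rabs (u - v)) ->
  continuous f x.
Proof.
  intros HK H. apply continuity_pt_filterlim.
  intros eps Heps. exists (eps / (K+1)). split.
  - apply Rdiv_lt_0_compat; lra.
  - intros y [_ Hy]. simpl in Hy. unfold R_dist in *.
    eapply Rle_lt_trans. apply H.
    apply Rle_lt_trans with (K * (eps/(K+1))).
    + apply Rmult_le_compat_l; lra.
    + apply Rlt_le_trans with ((K+1) * (eps/(K+1))).
      * apply Rmult_lt_compat_r. apply Rdiv_lt_0_compat; lra. lra.
      * right. field. lra.
Qed.

Lemma lip_exRInt f a b K : a <= b -> 0 <= K ->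
  (forall x y, a <= x <= b -> a <= y <= b -> Rabs (f x - f y) <= K * Rabs (x - y)) ->
  ex_RInt f a b.
Proof.
  intros Hab HK H.
  apply ex_RInt_ext with (fun t => f (clampR a b t)).
  { intros x Hx. rewrite Rmin_left in Hx by lra. rewrite Rmax_right in Hx by lra.
    rewrite clampR_id; auto; lra. }
  apply (@ex_RInt_continuous R_CompleteNormedModule). intros z _. apply lip_cont with K; auto.
  intros u v. eapply Rle_trans. apply H; apply clampR_in; auto.
  apply Rmult_le_compat_l; auto. apply clampR_lip.
Qed.

Lemma Rint_lip f a b K : a <= b -> 0 <= K ->
  (forall x y, a <= x <= b -> a <= y <= b -> Rabs (f x - f y) <= K * Rabs (x - y)) ->
  Rint f a b = RInt f a b.
Proof. intros. apply Rint_RInt. eapply lip_exRInt; eauto. Qed.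

Lemma RInt_minusR f g a b : ex_RInt f a b -> ex_RInt g a b ->
  RInt (fun x => f x - g x) a b = RInt f a b - RInt g a b.
Proof. intros. exact (RInt_minus f g a b H H0). Qed.
Lemma RInt_plusR f g a b : ex_RInt f a b -> ex_RInt g a b ->
  RInt (fun x => f x + g x) a b = RInt f a b + RInt g a b.
Proof. intros. exact (RInt_plus f g a b H H0). Qed.
Lemma RInt_scalR f a b l : ex_RInt f a b ->
  RInt (fun x => l * f x) a b = l * RInt f a b.
Proof. intros. exact (RInt_scal f a b l H). Qed.
Lemma RInt_ChaslesR f a b c : ex_RInt f a b -> ex_RInt f b c ->
  RInt f a b + RInt f b c = RInt f a c.
Proof. intros. exact (RInt_Chasles f a b c H H0). Qed.
Lemma ex_RInt_minusR f g a b : ex_RInt f a b -> ex_RInt g a b -> ex_RInt (fun x => f x - g x) a b.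
Proof. intros. exact (ex_RInt_minus f g a b H H0). Qed.
Lemma ex_RInt_scalR f a b l : ex_RInt f a b -> ex_RInt (fun x => l * f x) a b.
Proof. intros. exact (ex_RInt_scal f a b l H). Qed.

Lemma ex_RInt_Chasles_1R (f : R -> R) a b c : a <= b <= c -> ex_RInt f a c -> ex_RInt f a b.
Proof. intros. exact (@ex_RInt_Chasles_1 R_CompleteNormedModule f a b c H H0). Qed.
Lemma ex_RInt_Chasles_2R (f : R -> R) a b c : a <= b <= c -> ex_RInt f a c -> ex_RInt f b c.
Proof. intros. exact (@ex_RInt_Chasles_2 R_CompleteNormedModule f a b c H H0). Qed.

Definition invS lo hi acc m (L : list R) :=
  0 <= m /\ List.Forall (fun w => lo <= acc + m*w <= hi) L.

Fixpoint pdist (l1 l2 : list R) : R :=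
  match l1, l2 with x::l1', y::l2' => Rabs (x-y) + pdist l1' l2' | _, _ => 0 end.

Lemma pdist_ge0 l1 l2 : 0 <= pdist l1 l2.
Proof.
  revert l2; induction l1; intros [|y l2]; simpl; try lra.
  specialize (IHl1 l2). pose proof (Rabs_pos (a-y)). lra.
Qed.

Lemma pdist_refl l : pdist l l = 0.
Proof. induction l; simpl; auto. rewrite IHl, Rminus_diag, Rabs_R0; lra. Qed.

Lemma conv_in lo hi acc m y w t : 0 <= t <= m ->
  lo <= acc + m*y <= hi -> lo <= acc + m*w <= hi -> lo <= acc + t*y + (m-t)*w <= hi.
Proof.
  intros Ht Hy Hw.
  destruct (Req_dec m 0) as [E|E].
  { subst. assert (t = 0) by lra. subst. lra. }
  assert (Hm : 0 < m) by lra.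
  assert (Eq : acc + t*y + (m-t)*w = (t*(acc+m*y) + (m-t)*(acc+m*w))/m).
  { field. lra. }
  rewrite Eq. split.
  - apply Rmult_le_reg_l with m; auto.
    rewrite (Rmult_comm m (_/m)). unfold Rdiv. rewrite Rmult_assoc, Rinv_l, Rmult_1_r by lra.
    nra.
  - apply Rmult_le_reg_l with m; auto.
    rewrite (Rmult_comm m (_/m)). unfold Rdiv. rewrite Rmult_assoc, Rinv_l, Rmult_1_r by lra.
    nra.
Qed.

Lemma inv_inner lo hi acc m y0 y ys t : invS lo hi acc m (y0::y::ys) -> 0 <= t <= m ->
  invS lo hi (acc + t*y) (m-t) (y0::ys).
Proof.
  intros [Hm HF] Ht. split; [lra|].
  inversion HF; subst. inversion H2; subst.
  constructor.
  - apply conv_in; auto.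
  - rewrite List.Forall_forall in *. intros x Hx. apply conv_in; auto.
Qed.

Lemma inv_tail lo hi acc m y0 y ys : invS lo hi acc m (y0::y::ys) -> invS lo hi acc m (y0::ys).
Proof.
  intros [Hm HF]. split; auto. inversion HF; subst. inversion H2; subst. constructor; auto.
Qed.

Definition Ymax (L : list R) := fold_right (fun y acc => Rmax (Rabs y) acc) 0 L.
Lemma Ymax_spec L : 0 <= Ymax L /\ List.Forall (fun y => Rabs y <= Ymax L) L.
Proof.
  induction L; simpl. split; [lra|constructor].
  destruct IHL as [H1 H2]. split.
  - eapply Rle_trans; [apply H1|apply Rmax_r].
  - constructor. apply Rmax_l. eapply List.Forall_impl; [|apply H2].
    intros y Hy; simpl in Hy. eapply Rle_trans; [apply Hy|apply Rmax_r].
Qed.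

Lemma sint_cons y0 y ys F acc m :
  sint y0 (y::ys) F acc m = Rint (fun t => sint y0 ys F (acc + t*y) (m - t)) 0 m.
Proof. reflexivity. Qed.

Lemma sint_lip F lo hi K B : 0 <= K -> 0 <= B ->
  (forall z z', lo <= z <= hi -> lo <= z' <= hi -> Rabs (F z - F z') <= K * Rabs (z - z')) ->
  (forall z, lo <= z <= hi -> Rabs (F z) <= B) ->
  forall n M Y, 0 <= M -> 0 <= Y -> exists L, 0 <= L /\
   (forall y0 ys acc m, length ys = n -> invS lo hi acc m (y0::ys) -> Rabs (sint y0 ys F acc m) <= B * m ^ n) /\
   (forall y0 y0' ys ys' acc acc' m m', length ys = n -> length ys' = n ->
      List.Forall (fun y => Rabs y <= Y) (y0::ys) -> List.Forall (fun y => Rabs y <= Y) (y0'::ys') ->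
      m <= M -> m' <= M -> invS lo hi acc m (y0::ys) -> invS lo hi acc' m' (y0'::ys') ->
      Rabs (sint y0 ys F acc m - sint y0' ys' F acc' m') <=
        L * (Rabs (acc-acc') + Rabs (m-m') + pdist (y0::ys) (y0'::ys'))).
Proof.
  intros HK HB HFl HFb n. induction n as [|n IH]; intros M Y HM HY.
  - exists (K * (1 + Y + M)). split. { apply Rmult_le_pos; lra. } split.
    + intros y0 ys acc m Hl [Hm HF]. destruct ys; [|discriminate]. simpl. rewrite Rmult_1_r. apply HFb.
      inversion HF; auto.
    + intros y0 y0' ys ys' acc acc' m m' Hl0 Hl HY1 HY2 Hm Hm' [H0 H1] [H0' H1'].
      destruct ys; [|discriminate]. destruct ys'; [|discriminate]. simpl.
      inversion H1; inversion H1'; inversion HY1; inversion HY2; subst.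
      eapply Rle_trans. apply HFl; auto.
      rewrite Rplus_0_r.
      assert (E : acc + m*y0 - (acc' + m'*y0') = (acc - acc') + (m - m')*y0 + m'*(y0-y0')) by ring.
      rewrite E.
      pose proof (Rabs_triang ((acc - acc') + (m - m')*y0) (m'*(y0-y0'))).
      pose proof (Rabs_triang (acc - acc') ((m - m')*y0)).
      rewrite Rabs_mult in H, H2. rewrite (Rabs_pos_eq m') in H by lra.
      pose proof (Rabs_pos (m-m')). pose proof (Rabs_pos (y0-y0')). pose proof (Rabs_pos (acc-acc')).
      assert (Rabs (m-m') * Rabs y0 <= Rabs (m-m') * Y) by (apply Rmult_le_compat_l; lra).
      assert (m' * Rabs (y0 - y0') <= M * Rabs (y0-y0')) by (apply Rmult_le_compat_r; lra).
      rewrite Rmult_assoc. apply Rmult_le_compat_l; auto. nra.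
  -
    assert (Hin : forall y0 y ys acc m, length ys = n -> invS lo hi acc m (y0::y::ys) ->
       ex_RInt (fun t => sint y0 ys F (acc + t*y) (m - t)) 0 m /\
       (forall t, 0 <= t <= m -> Rabs (sint y0 ys F (acc + t*y) (m - t)) <= B * m ^ n)).
    { intros y0 y ys acc m Hlen Hinv.
      destruct (Ymax_spec (y0::y::ys)) as [HY0 HYs].
      destruct (IH m (Ymax (y0::y::ys)) (proj1 Hinv) HY0) as [L0 [HL0 [Hb Hl]]].
      split.
      - apply lip_exRInt with (L0 * (Ymax (y0::y::ys) + 1)). apply Hinv.
        apply Rmult_le_pos; lra.
        intros t t' Ht Ht'. eapply Rle_trans. apply Hl; auto.
        + inversion HYs; subst. inversion H2; subst. constructor; auto.
        + inversion HYs; subst. inversion H2; subst. constructor; auto.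
        + lra. + lra.
        + apply inv_inner; auto. + apply inv_inner; auto.
        + rewrite pdist_refl, Rplus_0_r.
          assert (E1 : acc + t*y - (acc + t'*y) = (t-t')*y) by ring.
          assert (E2 : m - t - (m - t') = -(t-t')) by ring.
          rewrite E1, E2, Rabs_mult, Rabs_Ropp.
          inversion HYs; subst. inversion H2; subst.
          pose proof (Rabs_pos (t-t')).
          assert (Rabs (t-t') * Rabs y <= Rabs (t-t') * Ymax (y0::y::ys)) by (apply Rmult_le_compat_l; lra).
          rewrite Rmult_assoc. apply Rmult_le_compat_l; auto. nra.
      - intros t Ht. eapply Rle_trans. apply Hb; auto. apply inv_inner; auto.
        apply Rmult_le_compat_l; auto. apply pow_incr. lra. }
    destruct (IH M Y HM HY) as [L0 [HL0 [Hb Hl]]].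
    exists (M*L0*(M+1) + B*M^n). split.
    { pose proof (pow_le M n HM). apply Rplus_le_le_0_compat; apply Rmult_le_pos; try lra.
      apply Rmult_le_pos; lra. }
    split.
    + intros y0 ys0 acc m Hlen Hinv. destruct ys0 as [|y ys]; [discriminate|].
      simpl in Hlen; injection Hlen as Hlen.
      rewrite sint_cons. destruct (Hin y0 y ys acc m Hlen Hinv) as [Hex Hbd].
      rewrite Rint_RInt by auto. rewrite <- tech_pow_Rmult.
      replace (B * (m * m ^ n)) with ((m - 0) * (B * m ^ n)) by ring.
      apply abs_RInt_le_const; auto. apply Hinv.
    + intros y0 y0' ys0 ys'' acc acc' m m' Hl0 Hl' HY1 HY2 Hm Hm' Hinv Hinv'.
      destruct ys0 as [|y ys]; [discriminate|]. simpl in Hl0. injection Hl0 as Hl0.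
      destruct ys'' as [|y' ys']; [discriminate|]. simpl in Hl'. injection Hl' as Hl'.
      rewrite !sint_cons.
      destruct (Hin y0 y ys acc m Hl0 Hinv) as [Hex Hbd].
      destruct (Hin y0' y' ys' acc' m' Hl' Hinv') as [Hex' Hbd'].
      rewrite !Rint_RInt by auto.
      set (g := fun t => sint y0 ys F (acc + t*y) (m - t)) in *.
      set (g' := fun t => sint y0' ys' F (acc' + t*y') (m' - t)) in *.
      set (mu := Rmin m m').
      assert (Hm0 : 0 <= m) by apply Hinv. assert (Hm0' : 0 <= m') by apply Hinv'.
      assert (Hmu : 0 <= mu <= m /\ mu <= m') by (unfold mu, Rmin; destruct Rle_dec; lra).
      assert (Hmu2 : (m - mu) + (m' - mu) = Rabs (m - m')) by
        (unfold mu, Rmin, Rabs; destruct Rle_dec, Rcase_abs; lra).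
      assert (E1 : ex_RInt g 0 mu) by (eapply ex_RInt_Chasles_1R; eauto; lra).
      assert (E1' : ex_RInt g' 0 mu) by (eapply ex_RInt_Chasles_1R; eauto; lra).
      assert (E2 : ex_RInt g mu m) by (eapply ex_RInt_Chasles_2R; eauto; lra).
      assert (E2' : ex_RInt g' mu m') by (eapply ex_RInt_Chasles_2R; eauto; lra).
      rewrite <- (RInt_ChaslesR g 0 mu m) by auto.
      rewrite <- (RInt_ChaslesR g' 0 mu m') by auto.
      apply List.Forall_cons_iff in HY1 as [HYa HY1]. apply List.Forall_cons_iff in HY1 as [HYb HY1].
      apply List.Forall_cons_iff in HY2 as [HYa' HY2]. apply List.Forall_cons_iff in HY2 as [HYb' HY2].
      set (PD := Rabs (y0 - y0') + (Rabs (y - y') + pdist ys ys')).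
      assert (HPD : pdist (y0 :: y :: ys) (y0' :: y' :: ys') = PD) by reflexivity.
      rewrite HPD.
      assert (HA : Rabs (RInt g 0 mu - RInt g' 0 mu) <= (mu - 0) * (L0 * (Rabs (acc-acc') + Rabs (m-m') + (M+1)*PD))).
      { rewrite <- RInt_minusR by auto.
        apply abs_RInt_le_const; auto. lra. apply ex_RInt_minusR; auto.
        intros t Ht. unfold g, g'. eapply Rle_trans.
        { apply Hl; auto; try lra; try (apply inv_inner; auto; lra); constructor; auto. }
        { apply Rmult_le_compat_l; auto.
          assert (X1 : acc + t*y - (acc' + t*y') = (acc - acc') + t*(y-y')) by ring.
          assert (X2 : m - t - (m' - t) = m - m') by ring.
          rewrite X1, X2. simpl pdist.
          pose proof (Rabs_triang (acc-acc') (t*(y-y'))). rewrite Rabs_mult, (Rabs_pos_eq t) in H by lra.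
          pose proof (Rabs_pos (y-y')). pose proof (Rabs_pos (y0-y0')). pose proof (pdist_ge0 ys ys').
          assert (t * Rabs (y-y') <= M * Rabs (y-y')) by (apply Rmult_le_compat_r; lra).
          unfold PD. nra. } }
      rewrite Rminus_0_r in HA.
      assert (HBd : forall t, 0 <= t <= m -> Rabs (g t) <= B * M ^ n).
      { intros t Ht. eapply Rle_trans. apply Hbd; auto. apply Rmult_le_compat_l; auto.
        apply pow_incr; lra. }
      assert (HBd' : forall t, 0 <= t <= m' -> Rabs (g' t) <= B * M ^ n).
      { intros t Ht. eapply Rle_trans. apply Hbd'; auto. apply Rmult_le_compat_l; auto.
        apply pow_incr; lra. }
      assert (HB1 : Rabs (RInt g mu m) <= (m - mu) * (B * M ^ n)).
      { apply abs_RInt_le_const; auto. lra. intros; apply HBd; lra. }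
      assert (HB2 : Rabs (RInt g' mu m') <= (m' - mu) * (B * M ^ n)).
      { apply abs_RInt_le_const; auto. lra. intros; apply HBd'; lra. }
      replace (RInt g 0 mu + RInt g mu m - (RInt g' 0 mu + RInt g' mu m'))
        with ((RInt g 0 mu - RInt g' 0 mu) + RInt g mu m - RInt g' mu m') by ring.
      eapply Rle_trans. apply Rabs_triang.
      eapply Rle_trans. apply Rplus_le_compat_r. apply Rabs_triang.
      rewrite Rabs_Ropp.
      pose proof (pow_le M n HM).
      pose proof (Rabs_pos (acc-acc')). pose proof (Rabs_pos (m-m')).
      assert (0 <= PD) by (unfold PD; pose proof (Rabs_pos (y-y')); pose proof (Rabs_pos (y0-y0')); pose proof (pdist_ge0 ys ys'); lra).
      assert (X : mu * (L0 * (Rabs (acc-acc') + Rabs (m-m') + (M+1)*PD))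
                  <= M * L0 * (M+1) * (Rabs (acc-acc') + Rabs (m-m') + PD)).
      { replace (M * L0 * (M+1) * (Rabs (acc-acc') + Rabs (m-m') + PD)) with
          (M * (L0 * ((M+1)*(Rabs (acc-acc') + Rabs (m-m') + PD)))) by ring.
        apply Rmult_le_compat; try lra.
        apply Rmult_le_pos; auto. nra.
        apply Rmult_le_compat_l; auto. nra. }
      assert (Y1 : (m - mu) * (B * M ^ n) + (m' - mu) * (B * M ^ n)
                  = B * M ^ n * Rabs (m-m')) by (rewrite <- Hmu2; ring).
      assert (Y2 : B * M ^ n * Rabs (m-m') <= B * M ^ n * (Rabs (acc-acc') + Rabs (m-m') + PD)).
      { apply Rmult_le_compat_l. apply Rmult_le_pos; auto. lra. }
      lra.
Qed.

Lemma ex_RInt_extR (f g : R -> R) a b : (forall x, Rmin a b < x < Rmax a b -> f x = g x) ->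
  ex_RInt f a b -> ex_RInt g a b.
Proof. apply ex_RInt_ext. Qed.
Lemma RInt_extR (f g : R -> R) a b : (forall x, Rmin a b < x < Rmax a b -> f x = g x) ->
  RInt f a b = RInt g a b.
Proof. apply RInt_ext. Qed.

Lemma invS_incl lo hi acc m L L' : (forall x, In x L' -> In x L) ->
  invS lo hi acc m L -> invS lo hi acc m L'.
Proof.
  intros Hi [Hm HF]. split; auto. rewrite List.Forall_forall in *. intros; apply HF, Hi; auto.
Qed.

Lemma sint_inner_ex F lo hi K B : 0 <= K -> 0 <= B ->
  (forall z z', lo <= z <= hi -> lo <= z' <= hi -> Rabs (F z - F z') <= K * Rabs (z - z')) ->
  (forall z, lo <= z <= hi -> Rabs (F z) <= B) ->
  forall y0 y ys acc m, invS lo hi acc m (y0::y::ys) ->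
  ex_RInt (fun t => sint y0 ys F (acc + t*y) (m - t)) 0 m.
Proof.
  intros HK HB HFl HFb y0 y ys acc m Hinv.
  destruct (Ymax_spec (y0::y::ys)) as [HY0 HYs].
  destruct (sint_lip F lo hi K B HK HB HFl HFb (length ys) m (Ymax (y0::y::ys)) (proj1 Hinv) HY0)
    as [L0 [HL0 [Hb Hl]]].
  apply lip_exRInt with (L0 * (Ymax (y0::y::ys) + 1)). apply Hinv.
  apply Rmult_le_pos; lra.
  apply List.Forall_cons_iff in HYs as [HYa HYs]. apply List.Forall_cons_iff in HYs as [HYb HYs].
  intros t t' Ht Ht'. eapply Rle_trans.
  { apply Hl; auto; try lra; try (apply inv_inner; auto; lra); constructor; auto. }
  rewrite pdist_refl, Rplus_0_r.
  assert (E1 : acc + t*y - (acc + t'*y) = (t-t')*y) by ring.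
  assert (E2 : m - t - (m - t') = -(t-t')) by ring.
  rewrite E1, E2, Rabs_mult, Rabs_Ropp.
  pose proof (Rabs_pos (t-t')).
  assert (Rabs (t-t') * Rabs y <= Rabs (t-t') * Ymax (y0::y::ys)) by (apply Rmult_le_compat_l; lra).
  rewrite Rmult_assoc. apply Rmult_le_compat_l; auto. nra.
Qed.

Lemma deriv_affine F1 F c d t :
  derivable_pt_lim F1 (c + d*t) (F (c + d*t)) ->
  derivable_pt_lim (fun t => F1 (c + d*t)) t (F (c + d*t) * d).
Proof.
  intros H.
  apply (derivable_pt_lim_comp (fun t => c + d*t) F1 t d (F (c+d*t))); auto.
  apply is_derive_Reals. auto_derive; auto. ring.
Qed.

Lemma peel F F1 lo hi K1 B1 : 0 <= K1 -> 0 <= B1 ->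
  (forall z, lo <= z <= hi -> derivable_pt_lim F1 z (F z)) ->
  (forall z, lo <= z <= hi -> continuity_pt F z) ->
  (forall z z', lo <= z <= hi -> lo <= z' <= hi -> Rabs (F1 z - F1 z') <= K1 * Rabs (z - z')) ->
  (forall z, lo <= z <= hi -> Rabs (F1 z) <= B1) ->
  forall ys y0 yk acc m, y0 <> yk -> invS lo hi acc m (y0 :: ys ++ [yk]) ->
  sint y0 (ys ++ [yk]) F acc m = (sint yk ys F1 acc m - sint y0 ys F1 acc m)/(yk - y0).
Proof.
  intros HK HB Hd Hc HFl HFb ys. induction ys as [|y ys IH]; intros y0 yk acc m Hne Hinv.
  - simpl. assert (Hm : 0 <= m) by apply Hinv.
    destruct Hinv as [_ HF]. apply List.Forall_cons_iff in HF as [H0 HF].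
    apply List.Forall_cons_iff in HF as [Hk _].
    assert (Hpt : forall t, 0 <= t <= m -> lo <= acc + m*y0 + (yk - y0)*t <= hi).
    { intros t Ht. replace (acc + m*y0 + (yk-y0)*t) with (acc + t*yk + (m-t)*y0) by ring.
      apply conv_in; auto. }
    set (G := fun t => F1 (acc + m*y0 + (yk - y0)*t) / (yk - y0)).
    assert (HI : is_RInt (fun t => F (acc + m*y0 + (yk - y0)*t)) 0 m (minus (G m) (G 0))).
    { apply (@is_RInt_derive R_CompleteNormedModule G).
      - intros x Hx. rewrite Rmin_left in Hx by lra. rewrite Rmax_right in Hx by lra.
        apply is_derive_Reals.
        replace (F (acc + m * y0 + (yk - y0) * x)) with
          ((F (acc + m * y0 + (yk - y0) * x) * (yk - y0)) * / (yk - y0)).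
        2: { field. intro; apply Hne; lra. }
        unfold Rdiv. apply derivable_pt_lim_scal_right.
        apply deriv_affine. apply Hd. apply Hpt; lra.
      - intros x Hx. rewrite Rmin_left in Hx by lra. rewrite Rmax_right in Hx by lra.
        apply continuity_pt_filterlim.
        apply (continuity_pt_comp (fun t => acc + m*y0 + (yk-y0)*t) F).
        + apply continuity_pt_plus. apply continuity_pt_const. intros u v; auto.
          apply continuity_pt_scal. apply continuity_pt_id.
        + apply Hc, Hpt; lra. }
    rewrite Rint_RInt.
    2: { eexists. eapply is_RInt_ext; [|exact HI]. intros x _. simpl. f_equal. ring. }
    rewrite (RInt_extR _ (fun t => F (acc + m*y0 + (yk - y0)*t))).
    2: { intros x _. simpl. f_equal. ring. }
    rewrite (is_RInt_unique _ _ _ _ HI). unfold G, minus, plus, opp. simpl.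
    replace (acc + m*y0 + (yk-y0)*m) with (acc + m*yk) by ring.
    replace (acc + m*y0 + (yk-y0)*0) with (acc + m*y0) by ring.
    field. intro; apply Hne; lra.
  - assert (Hm : 0 <= m) by apply Hinv.
    change ((y :: ys) ++ [yk]) with (y :: (ys ++ [yk])). rewrite !sint_cons.
    assert (Hinv0 : invS lo hi acc m (y0 :: y :: ys)).
    { eapply invS_incl; [|exact Hinv]. intros x Hx. simpl in *. rewrite in_app_iff. tauto. }
    assert (Hinvk : invS lo hi acc m (yk :: y :: ys)).
    { eapply invS_incl; [|exact Hinv]. intros x Hx. simpl in *. rewrite in_app_iff. simpl. tauto. }
    pose proof (sint_inner_ex F1 lo hi K1 B1 HK HB HFl HFb y0 y ys acc m Hinv0) as E0.
    pose proof (sint_inner_ex F1 lo hi K1 B1 HK HB HFl HFb yk y ys acc m Hinvk) as Ek.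
    assert (Heq : forall t, 0 <= t <= m -> sint y0 (ys ++ [yk]) F (acc + t*y) (m - t) =
       (sint yk ys F1 (acc + t*y) (m - t) - sint y0 ys F1 (acc + t*y) (m - t))/(yk - y0)).
    { intros t Ht. apply IH; auto. apply inv_inner; auto. }
    assert (Eh : ex_RInt (fun t => (sint yk ys F1 (acc + t*y) (m - t) - sint y0 ys F1 (acc + t*y) (m - t))/(yk - y0)) 0 m).
    { apply (ex_RInt_extR (fun t => / (yk - y0) * (sint yk ys F1 (acc + t*y) (m - t) - sint y0 ys F1 (acc + t*y) (m - t)))).
      intros; unfold Rdiv; ring. apply ex_RInt_scalR, ex_RInt_minusR; auto. }
    rewrite (Rint_RInt (fun t => sint y0 (ys ++ [yk]) F (acc + t * y) (m - t))).
    2: { eapply ex_RInt_extR; [|exact Eh]. intros x Hx. rewrite Rmin_left in Hx by lra.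
         rewrite Rmax_right in Hx by lra. symmetry; apply Heq; lra. }
    rewrite !Rint_RInt by auto.
    rewrite (RInt_extR _ (fun t => / (yk - y0) * (sint yk ys F1 (acc + t*y) (m - t) - sint y0 ys F1 (acc + t*y) (m - t)))).
    2: { intros x Hx. rewrite Rmin_left in Hx by lra. rewrite Rmax_right in Hx by lra.
         rewrite Heq by lra. unfold Rdiv; ring. }
    rewrite RInt_scalR by (apply ex_RInt_minusR; auto).
    rewrite RInt_minusR by auto. unfold Rdiv; ring.
Qed.

Lemma Deriv_eq f x l : derivable_pt_lim f x l -> Deriv f x = l.
Proof.
  intros H. unfold Deriv.
  assert (Hex : exists l, derivable_pt_lim f x l) by eauto.
  pose proof (epsilon_spec (inhabits 0) _ Hex) as Hs.
  eapply uniqueness_limite; eauto.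
Qed.

Lemma derivable_local f g x l d : 0 < d -> (forall y, Rabs (y - x) < d -> f y = g y) ->
  derivable_pt_lim f x l -> derivable_pt_lim g x l.
Proof.
  intros Hd Heq H. apply is_derive_Reals. apply is_derive_Reals in H.
  eapply is_derive_ext_loc; [|exact H].
  exists (mkposreal d Hd). intros y Hy. apply Heq. exact Hy.
Qed.

Lemma Dn_family f (phi : nat -> R -> R) lo hi :
  (forall x, lo < x < hi -> f x = phi 0%nat x) ->
  (forall j x, lo < x < hi -> derivable_pt_lim (phi j) x (phi (S j) x)) ->
  forall j x, lo < x < hi -> Dn j f x = phi j x.
Proof.
  intros H0 HD j. induction j as [|j IH]; intros x Hx.
  - simpl. auto.
  - simpl. apply Deriv_eq.
    apply derivable_local with (phi j) (Rmin (x - lo) (hi - x)).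
    + apply Rmin_glb_lt; lra.
    + intros y Hy. symmetry. apply IH.
      unfold Rabs in Hy. destruct Rcase_abs;
      pose proof (Rmin_l (x-lo) (hi-x)); pose proof (Rmin_r (x-lo) (hi-x)); lra.
    + apply HD; auto.
Qed.

Lemma Rint_ext_closed f g a b : (forall x, Rmin a b <= x <= Rmax a b -> f x = g x) ->
  Rint f a b = Rint g a b.
Proof.
  intros H. unfold Rint.
  destruct excluded_middle_informative as [hf|hf];
  destruct excluded_middle_informative as [hg|hg].
  - apply RiemannInt_ext. auto.
  - exfalso. apply hg. destruct hf as [p]. constructor. eapply Riemann_integrable_ext; eauto.
  - exfalso. apply hf. destruct hg as [p]. constructor. eapply Riemann_integrable_ext; [|exact p].
    intros; symmetry; auto.
  - reflexivity.
Qed.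

Lemma sint_ext F G lo hi : (forall z, lo <= z <= hi -> F z = G z) ->
  forall ys y0 acc m, invS lo hi acc m (y0::ys) -> sint y0 ys F acc m = sint y0 ys G acc m.
Proof.
  intros HFG ys. induction ys as [|y ys IH]; intros y0 acc m Hinv.
  - simpl. apply HFG. destruct Hinv as [_ HF]. inversion HF; auto.
  - rewrite !sint_cons. apply Rint_ext_closed. intros t Ht.
    assert (Hm : 0 <= m) by apply Hinv.
    rewrite Rmin_left in Ht by lra. rewrite Rmax_right in Ht by lra.
    apply IH. apply inv_inner; auto.
Qed.

Lemma lip_of_deriv F F' lo hi K :
  (forall z, lo <= z <= hi -> derivable_pt_lim F z (F' z)) ->
  (forall z, lo <= z <= hi -> Rabs (F' z) <= K) ->
  forall z z', lo <= z <= hi -> lo <= z' <= hi -> Rabs (F z - F z') <= K * Rabs (z - z').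
Proof.
  intros HD HB z z' Hz Hz'.
  destruct (MVT_abs F F' z' z) as [c [Hc Hcin]].
  { intros c Hc. apply HD. unfold Rmin, Rmax in Hc. destruct Rle_dec; lra. }
  rewrite Hc. apply Rmult_le_compat_r. apply Rabs_pos. apply HB.
  unfold Rmin, Rmax in Hcin. destruct Rle_dec; lra.
Qed.

Definition inI lo hi (L : list R) := List.Forall (fun y => lo <= y <= hi) L.

Lemma invS_01 lo hi L : inI lo hi L -> invS lo hi 0 1 L.
Proof.
  intros H. split; [lra|]. eapply List.Forall_impl; [|exact H]. intros y Hy. simpl in Hy. lra.
Qed.

Section HG.
Variables (phi : nat -> R -> R) (lo hi : R) (T : list R -> R).
Hypothesis Hlohi : lo < hi.
Hypothesis HD : forall j z, lo <= z <= hi -> derivable_pt_lim (phi j) z (phi (S j) z).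
Hypothesis HB : forall j, exists B, 0 <= B /\ forall z, lo <= z <= hi -> Rabs (phi j z) <= B.
Hypothesis T0 : forall y0, lo <= y0 <= hi -> T [y0] = phi 0%nat y0.
Hypothesis Trec : forall y0 ys yk, inI lo hi (y0 :: ys ++ [yk]) -> y0 <> yk ->
  T (y0 :: ys ++ [yk]) = (T (yk :: ys) - T (y0 :: ys)) / (yk - y0).
Hypothesis Tcont : forall y0 ys yk, inI lo hi (y0 :: ys ++ [yk]) ->
  forall eps, 0 < eps -> exists d, 0 < d /\ forall y, lo <= y <= hi -> Rabs (y - yk) < d ->
  Rabs (T (y0 :: ys ++ [y]) - T (y0 :: ys ++ [yk])) < eps.

Lemma phi_lip j : exists K, 0 <= K /\ forall z z', lo <= z <= hi -> lo <= z' <= hi ->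
  Rabs (phi j z - phi j z') <= K * Rabs (z - z').
Proof.
  destruct (HB (S j)) as [B [HB0 HB1]]. exists B. split; auto.
  apply lip_of_deriv with (phi (S j)); auto.
Qed.

Lemma inI_app_inv y0 ys y : inI lo hi (y0 :: ys ++ [y]) ->
  inI lo hi (y :: ys) /\ inI lo hi (y0 :: ys) /\ lo <= y <= hi /\ lo <= y0 <= hi.
Proof.
  unfold inI. rewrite !List.Forall_forall. intros H.
  assert (H' : forall x, x = y0 \/ In x ys \/ x = y -> lo <= x <= hi).
  { intros x Hx. apply H. simpl. rewrite in_app_iff. simpl. intuition. }
  split; [|split; [|split]].
  - intros u [Hx|Hx]; apply H'; auto.
  - intros u [Hx|Hx]; apply H'; auto.
  - apply H'; auto. - apply H'; auto.
Qed.

Lemma HG_main : forall n y0 ys, length ys = n -> inI lo hi (y0::ys) ->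
  sint y0 ys (phi n) 0 1 = T (y0 :: ys).
Proof.
  intros n. induction n as [|n IH]; intros y0 ys Hl HI.
  - destruct ys; [|discriminate]. simpl. rewrite T0. f_equal; ring.
    inversion HI; auto.
  - destruct (exists_last (l := ys)) as [ys' [yk Hys]].
    { intro; subst; discriminate. }
    subst ys. rewrite length_app in Hl. simpl in Hl. assert (Hl' : length ys' = n) by lia.
    destruct (HB n) as [B1 [HB1 HB1']]. destruct (phi_lip n) as [K1 [HK1 HK1']].
    assert (Hdist : forall y, lo <= y <= hi -> y0 <> y ->
      sint y0 (ys' ++ [y]) (phi (S n)) 0 1 = T (y0 :: ys' ++ [y])).
    { intros y Hy Hne.
      assert (HI' : inI lo hi (y0 :: ys' ++ [y])).
      { apply inI_app_inv in HI as [_ [HI0 _]]. unfold inI in *.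
        apply List.Forall_cons_iff in HI0 as [Ha Hb]. constructor; auto.
        apply List.Forall_app; split; auto. }
      rewrite (peel (phi (S n)) (phi n) lo hi K1 B1); auto.
      + destruct (inI_app_inv _ _ _ HI') as [A1 [A2 _]].
        rewrite !IH by auto. rewrite Trec; auto.
      + intros z Hz. apply derivable_continuous_pt. exists (phi (S (S n)) z). apply HD; auto.
      + apply invS_01; auto. }
    destruct (Req_dec y0 yk) as [E|E].
    2: { apply Hdist; auto. apply inI_app_inv in HI; tauto. }
    destruct (inI_app_inv _ _ _ HI) as [_ [HI0 [Hyk Hy0]]].
    destruct (HB (S n)) as [B2 [HB2 HB2']]. destruct (phi_lip (S n)) as [K2 [HK2 HK2']].
    destruct (sint_lip (phi (S n)) lo hi K2 B2 HK2 HB2 HK2' HB2' (length (ys' ++ [yk])) 1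
                (Rmax (Rabs lo) (Rabs hi)) ltac:(lra) ltac:(pose proof (Rabs_pos lo); pose proof (Rmax_l (Rabs lo) (Rabs hi)); lra))
      as [L [HL0 [_ HL]]].
    assert (HYb : forall l, inI lo hi l -> List.Forall (fun y => Rabs y <= Rmax (Rabs lo) (Rabs hi)) l).
    { intros l Hl0. eapply List.Forall_impl; [|exact Hl0]. intros y Hy. simpl in Hy.
      pose proof (Rmax_l (Rabs lo) (Rabs hi)). pose proof (Rmax_r (Rabs lo) (Rabs hi)).
      unfold Rabs in *. destruct (Rcase_abs y), (Rcase_abs lo), (Rcase_abs hi); lra. }
    apply Rminus_diag_uniq. apply Rabs_eq_0.
    apply Rle_antisym; [|apply Rabs_pos].
    apply Rnot_lt_le. intro Hpos.
    set (e := Rabs (sint y0 (ys' ++ [yk]) (phi (S n)) 0 1 - T (y0 :: ys' ++ [yk]))) in *.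
    destruct (Tcont y0 ys' yk HI (e/2)) as [d [Hd Hdc]]. lra.
    set (r := Rmin (Rmin (d/2) ((hi - lo)/2)) (e / (2 * (L + 1)))).
    assert (Hr : 0 < r).
    { unfold r. repeat apply Rmin_glb_lt; try lra. apply Rdiv_lt_0_compat; lra. }
    assert (Hr1 : r <= d/2) by (unfold r; eapply Rle_trans; apply Rmin_l).
    assert (Hr2 : r <= (hi-lo)/2) by (unfold r; eapply Rle_trans; [apply Rmin_l|apply Rmin_r]).
    assert (Hr3 : r <= e / (2 * (L + 1))) by (unfold r; apply Rmin_r).
    set (y := if Rle_dec (yk + r) hi then yk + r else yk - r).
    assert (Hy : lo <= y <= hi /\ Rabs (y - yk) = r).
    { unfold y. destruct Rle_dec; split; try lra;
      [replace (yk + r - yk) with r by ring | replace (yk - r - yk) with (-r) by ring;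
       rewrite Rabs_Ropp]; apply Rabs_pos_eq; lra. }
    destruct Hy as [Hy Hyr].
    assert (Hyne : y0 <> y) by (intro Heq; rewrite <- Heq, E, Rminus_diag, Rabs_R0 in Hyr; lra).
    assert (HIy : inI lo hi (y0 :: ys' ++ [y])).
    { unfold inI in *. apply List.Forall_cons_iff in HI0 as [Ha Hb]. constructor; auto.
      apply List.Forall_app; split; auto. }
    specialize (Hdist y Hy Hyne).
    assert (H1 : Rabs (sint y0 (ys' ++ [yk]) (phi (S n)) 0 1 - sint y0 (ys' ++ [y]) (phi (S n)) 0 1)
                 <= L * r).
    { eapply Rle_trans.
      { apply HL; try lra; try (apply invS_01; auto); try (apply HYb; auto); rewrite !length_app; auto. }
      { rewrite !Rminus_diag, !Rabs_R0, !Rplus_0_l.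
        assert (Hpd : forall l, pdist (y0 :: l ++ [yk]) (y0 :: l ++ [y]) = Rabs (yk - y)).
        { intros l. simpl. rewrite Rminus_diag, Rabs_R0, Rplus_0_l.
          induction l; simpl. ring. rewrite Rminus_diag, Rabs_R0, IHl. ring. }
        rewrite Hpd, Rabs_minus_sym, Hyr. lra. } }
    assert (H2 : Rabs (T (y0 :: ys' ++ [y]) - T (y0 :: ys' ++ [yk])) < e/2).
    { apply Hdc; auto. lra. }
    assert (H3 : L * r <= e/2 * (L/(L+1))).
    { apply Rle_trans with (L * (e / (2 * (L + 1)))). apply Rmult_le_compat_l; auto.
      right. field. lra. }
    assert (H4 : e/2 * (L/(L+1)) < e/2).
    { rewrite <- (Rmult_1_r (e/2)) at 2. apply Rmult_lt_compat_l. lra.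
      apply Rmult_lt_reg_r with (L+1). lra. unfold Rdiv. rewrite Rmult_assoc, Rinv_l by lra. lra. }
    rewrite Hdist in H1.
    assert (e <= Rabs (sint y0 (ys' ++ [yk]) (phi (S n)) 0 1 - T (y0 :: ys' ++ [y])) +
                 Rabs (T (y0 :: ys' ++ [y]) - T (y0 :: ys' ++ [yk]))).
    { unfold e. eapply Rle_trans; [|apply Rabs_triang]. right. f_equal. ring. }
    lra.
Qed.

End HG.

Lemma dd_cons y0 ys f : dd (y0 :: ys) f = sint y0 ys (Dn (length ys) f) 0 1.
Proof. reflexivity. Qed.

Definition Pf t y := 1 + t * (y - 1).
Fixpoint prodP t (L : list R) : R :=
  match L with [] => 1 | y :: L' => Pf t y * prodP t L' end.

Lemma prodP_app t l1 l2 : prodP t (l1 ++ l2) = prodP t l1 * prodP t l2.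
Proof. induction l1; simpl. ring. rewrite IHl1. ring. Qed.

Lemma Pf_lb t y lo : 0 <= t <= 1 -> 0 < lo <= y -> Rmin 1 lo <= Pf t y.
Proof.
  intros Ht Hy. unfold Pf, Rmin. destruct Rle_dec.
  - destruct (Rle_dec 1 y). nra. nra.
  - destruct (Rle_dec 1 y). nra. nra.
Qed.

Lemma mn_pos lo : 0 < lo -> 0 < Rmin 1 lo.
Proof. intros. unfold Rmin. destruct Rle_dec; lra. Qed.

Lemma prodP_lb t L lo hi : 0 <= t <= 1 -> 0 < lo -> inI lo hi L ->
  Rmin 1 lo ^ length L <= prodP t L.
Proof.
  intros Ht Hlo HI. induction L as [|y L IH]; simpl. lra.
  inversion HI; subst. pose proof (mn_pos lo Hlo).
  apply Rmult_le_compat; [lra| apply pow_le; lra | apply Pf_lb; auto; lra | auto].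
Qed.

Lemma prodP_pos t L lo hi : 0 <= t <= 1 -> 0 < lo -> inI lo hi L -> 0 < prodP t L.
Proof.
  intros. eapply Rlt_le_trans; [|eapply prodP_lb; eauto]. apply pow_lt, mn_pos; auto.
Qed.

Lemma cont_Pf y t : continuity_pt (fun t => Pf t y) t.
Proof.
  unfold Pf. apply continuity_pt_plus. apply continuity_pt_const. intros u v; auto.
  apply continuity_pt_mult. apply continuity_pt_id. apply continuity_pt_const. intros u v; auto.
Qed.

Lemma cont_prodP L t : continuity_pt (fun t => prodP t L) t.
Proof.
  induction L as [|y L IH]; simpl.
  - apply continuity_pt_const. intros u v; auto.
  - apply continuity_pt_mult; auto. apply cont_Pf.
Qed.

Lemma ex_RInt_cont01 f : (forall t, 0 <= t <= 1 -> continuity_pt f t) -> ex_RInt f 0 1.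
Proof.
  intros H. apply (@ex_RInt_continuous R_CompleteNormedModule). intros z Hz.
  rewrite Rmin_left in Hz by lra. rewrite Rmax_right in Hz by lra.
  apply continuity_pt_filterlim. auto.
Qed.

Lemma cont_pow_t k t : continuity_pt (fun t => t ^ k) t.
Proof. apply derivable_continuous_pt. apply derivable_pt_pow. Qed.

Lemma Tcont_gen lo hi (A : R -> R) C yk : 0 < lo -> lo <= yk <= hi -> 0 <= C ->
  (forall t, 0 <= t <= 1 -> continuity_pt A t) ->
  (forall t, 0 <= t <= 1 -> Rabs (A t) <= C) ->
  forall eps, 0 < eps -> exists d, 0 < d /\ forall y, lo <= y <= hi -> Rabs (y - yk) < d ->
  Rabs (RInt (fun t => A t / Pf t y) 0 1 - RInt (fun t => A t / Pf t yk) 0 1) < eps.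
Proof.
  intros Hlo Hyk HC Hc HA eps Heps.
  set (mn := Rmin 1 lo). assert (Hmn : 0 < mn) by (apply mn_pos; auto).
  set (C' := C / (mn*mn)).
  assert (HC' : 0 <= C') by (unfold C'; apply Rdiv_le_0_compat; nra).
  exists (eps / (C' + 1)). split. apply Rdiv_lt_0_compat; lra.
  intros y Hy Hd.
  assert (Hex : forall y, lo <= y <= hi -> ex_RInt (fun t => A t / Pf t y) 0 1).
  { intros y' Hy'. apply ex_RInt_cont01. intros t Ht. apply continuity_pt_div; auto.
    apply cont_Pf. assert (0 < lo <= y') by lra. pose proof (Pf_lb t y' lo Ht H). fold mn in H0. lra. }
  rewrite <- RInt_minusR by auto.
  eapply Rle_lt_trans.
  replace (RInt _ 0 1) with (RInt (fun t => A t / Pf t y - A t / Pf t yk) 0 1) by reflexivity.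
  apply abs_RInt_le_const with (M := C' * Rabs (y - yk)). lra.
  apply ex_RInt_minusR; auto.
  - intros t Ht. assert (X1 : 0 < lo <= y) by lra. assert (X2 : 0 < lo <= yk) by lra.
    pose proof (Pf_lb t y lo Ht X1) as H. pose proof (Pf_lb t yk lo Ht X2) as H0.
    fold mn in H, H0.
    replace (A t / Pf t y - A t / Pf t yk) with (A t * (t * (yk - y)) / (Pf t y * Pf t yk)).
    2: { unfold Pf in *. field. split; lra. }
    unfold Rdiv. rewrite !Rabs_mult. rewrite Rabs_inv.
    rewrite (Rabs_pos_eq t) by lra. rewrite (Rabs_pos_eq (Pf t y * Pf t yk)) by nra. rewrite Rabs_minus_sym.
    unfold C'. unfold Rdiv.
    assert (/ (Pf t y * Pf t yk) <= / (mn*mn)).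
    { apply Rinv_le_contravar. nra. apply Rmult_le_compat; lra. }
    pose proof (Rabs_pos (A t)). pose proof (Rabs_pos (y - yk)). pose proof (HA t Ht).
    assert (0 <= / (Pf t y * Pf t yk)) by (apply Rlt_le, Rinv_0_lt_compat; nra).
    assert (Rabs (A t) * (t * Rabs (y - yk)) <= C * Rabs (y - yk)).
    { rewrite <- Rmult_assoc. apply Rmult_le_compat_r; auto.
      replace C with (C * 1) by ring. apply Rmult_le_compat; lra. }
    apply Rle_trans with (C * Rabs (y - yk) * / (Pf t y * Pf t yk)).
    apply Rmult_le_compat_r; auto.
    replace (C * / (mn * mn) * Rabs (y - yk)) with (C * Rabs (y - yk) * / (mn*mn)) by ring.
    apply Rmult_le_compat_l; auto. nra.
  - rewrite Rminus_0_r, Rmult_1_l.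
    apply Rle_lt_trans with (C' * (eps / (C'+1))). apply Rmult_le_compat_l; lra.
    apply Rlt_le_trans with ((C'+1) * (eps / (C'+1))). apply Rmult_lt_compat_r.
    apply Rdiv_lt_0_compat; lra. lra. right; field; lra.
Qed.

Definition lnD (j : nat) (x : R) : R :=
  match j with O => ln x | S k => (-1)^k * INR (fact k) / x^(S k) end.

Lemma lnD_deriv j z : 0 < z -> derivable_pt_lim (lnD j) z (lnD (S j) z).
Proof.
  intros Hz. destruct j as [|k].
  - simpl. replace (1 * 1 / (z * 1)) with (/ z) by (field; lra).
    apply derivable_pt_lim_ln; auto.
  - apply is_derive_Reals. unfold lnD.
    auto_derive. { apply Rmult_integral_contrapositive_currified; [lra|apply pow_nonzero; lra]. }
    rewrite fact_simpl, mult_INR. simpl pow.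
    replace (match k with 0%nat => 1 | S _ => INR k + 1 end) with (INR k + 1) by (destruct k; simpl; ring).
    assert (Hzk : z ^ k <> 0) by (apply pow_nonzero; lra).
    assert (E : forall k z, z <> 0 -> z^k <> 0 -> ((-1) ^ k * INR (fact k) *
      (- (1 * ((INR k + 1) * z ^ k)) * / (z * z ^ k * (z * z ^ k))) =
      -1 * (-1) ^ k * ((INR k + 1) * INR (fact k)) / (z * (z * z ^ k)))).
    { intros. field. auto. }
    rewrite S_INR. apply E; lra || auto.
Qed.

Lemma lnD_bound j lo hi : 0 < lo -> exists B, 0 <= B /\ forall z, lo <= z <= hi -> Rabs (lnD j z) <= B.
Proof.
  intros Hlo. destruct j as [|k].
  - exists (Rabs (ln lo) + Rabs (ln hi)). split. pose proof (Rabs_pos (ln lo)); pose proof (Rabs_pos (ln hi)); lra.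
    intros z Hz. simpl.
    assert (ln lo <= ln z) by (apply ln_le; lra).
    assert (ln z <= ln hi) by (apply ln_le; lra).
    unfold Rabs; repeat destruct Rcase_abs; lra.
  - exists (INR (fact k) / lo ^ (S k)). split.
    { apply Rdiv_le_0_compat. apply pos_INR. apply pow_lt; lra. }
    intros z Hz. unfold lnD. unfold Rdiv. rewrite !Rabs_mult, Rabs_inv.
    rewrite pow_1_abs, Rmult_1_l, Rabs_pos_eq by apply pos_INR.
    rewrite Rabs_pos_eq by (apply pow_le; lra).
    apply Rmult_le_compat_l. apply pos_INR.
    apply Rinv_le_contravar. apply pow_lt; lra. apply pow_incr; lra.
Qed.

Lemma Dn_ln j z : 0 < z -> Dn j ln z = lnD j z.
Proof.
  intros Hz. apply (Dn_family ln lnD 0 (z+1)).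
  - intros; reflexivity.
  - intros j' x Hx. apply lnD_deriv; lra.
  - lra.
Qed.

Definition PhiLn (L : list R) (t : R) : R :=
  match L with
  | [y0] => (y0 - 1) / Pf t y0
  | _ => (-1) ^ (length L) * t ^ (length L - 2) / prodP t L
  end.

Lemma PhiLn_long L t : (2 <= length L)%nat ->
  PhiLn L t = (-1) ^ (length L) * t ^ (length L - 2) / prodP t L.
Proof. intros. destruct L as [|a [|b L]]; simpl in *; try lia; reflexivity. Qed.

Lemma pow_le1 t n : 0 <= t <= 1 -> t ^ n <= 1.
Proof. intros. induction n; simpl. lra. nra. Qed.

Definition Tln L := RInt (PhiLn L) 0 1.

Lemma Pf_ne0 t y lo : 0 <= t <= 1 -> 0 < lo <= y -> Pf t y <> 0.
Proof. intros. pose proof (Pf_lb t y lo H H0). pose proof (mn_pos lo (proj1 H0)). lra. Qed.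

Lemma PhiLn_cont lo hi L : 0 < lo -> inI lo hi L -> forall t, 0 <= t <= 1 -> continuity_pt (PhiLn L) t.
Proof.
  intros Hlo HI t Ht. destruct L as [|y0 [|y1 L']].
  - simpl. unfold Rdiv. apply continuity_pt_mult. apply continuity_pt_mult.
    apply continuity_pt_const; intros u v; auto. apply cont_pow_t.
    apply continuity_pt_const; intros u v; auto.
  - simpl. apply continuity_pt_div. apply continuity_pt_const; intros u v; auto.
    apply cont_Pf. inversion HI; subst. apply (Pf_ne0 t y0 lo); auto; lra.
  - unfold PhiLn. apply continuity_pt_div.
    apply continuity_pt_mult. apply continuity_pt_const; intros u v; auto. apply cont_pow_t.
    apply cont_prodP. pose proof (prodP_pos t (y0::y1::L') lo hi Ht Hlo HI). lra.
Qed.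

Lemma PhiLn_ex lo hi L : 0 < lo -> inI lo hi L -> ex_RInt (PhiLn L) 0 1.
Proof. intros. apply ex_RInt_cont01. apply PhiLn_cont with lo hi; auto. Qed.

Lemma Tln_single y0 : 0 < y0 -> Tln [y0] = ln y0.
Proof.
  intros Hy. unfold Tln.
  assert (HP : forall t, 0 <= t <= 1 -> 0 < 1 + t * (y0 - 1)).
  { intros t Ht. pose proof (Pf_lb t y0 y0 Ht ltac:(lra)). pose proof (mn_pos y0 Hy). unfold Pf in *. lra. }
  assert (HI : is_RInt (PhiLn [y0]) 0 1 (minus ((fun t => ln (1 + t*(y0-1))) 1) ((fun t => ln (1 + t*(y0-1))) 0))).
  { apply (@is_RInt_derive R_CompleteNormedModule (fun t => ln (1 + t*(y0-1)))).
    - intros x Hx. rewrite Rmin_left in Hx by lra. rewrite Rmax_right in Hx by lra.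
      simpl. unfold Pf. auto_derive. apply HP; auto. field. specialize (HP x Hx). lra.
    - intros x Hx. rewrite Rmin_left in Hx by lra. rewrite Rmax_right in Hx by lra.
      apply continuity_pt_filterlim. apply PhiLn_cont with y0 y0; auto. constructor; [lra|constructor]. }
  rewrite (is_RInt_unique _ _ _ _ HI). unfold minus, plus, opp; simpl.
  replace (1 + 1 * (y0 - 1)) with y0 by ring. replace (1 + 0 * (y0-1)) with 1 by ring.
  rewrite ln_1. ring.
Qed.

Lemma Tln_rec lo hi y0 ys yk : 0 < lo -> inI lo hi (y0 :: ys ++ [yk]) -> y0 <> yk ->
  Tln (y0 :: ys ++ [yk]) = (Tln (yk :: ys) - Tln (y0 :: ys)) / (yk - y0).
Proof.
  intros Hlo HI Hne.
  destruct (inI_app_inv lo hi y0 ys yk HI) as [Hk [H0 [Hyk Hy0]]].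
  unfold Tln.
  rewrite (RInt_extR _ (fun t => / (yk - y0) * (PhiLn (yk :: ys) t - PhiLn (y0 :: ys) t))).
  2: { intros t Ht. rewrite Rmin_left in Ht by lra. rewrite Rmax_right in Ht by lra.
       assert (Ht' : 0 <= t <= 1) by lra.
       assert (P0 : Pf t y0 <> 0) by (apply (Pf_ne0 t y0 lo); lra).
       assert (Pk : Pf t yk <> 0) by (apply (Pf_ne0 t yk lo); lra).
       destruct ys as [|y ys'].
       - simpl. unfold Pf in *. field. repeat split; auto. intro; apply Hne; lra.
       - assert (Q : prodP t (y :: ys') <> 0).
         { pose proof (prodP_pos t (y::ys') lo hi Ht' Hlo). apply inI_app_inv in HI. 
           assert (inI lo hi (y::ys')) by (inversion H0; auto). specialize (H H1). lra. }
         rewrite !PhiLn_long by (simpl; rewrite ?length_app; simpl; lia).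
         rewrite app_comm_cons, prodP_app, length_app. simpl length.
         replace (S (S (length ys')) + 1 - 2)%nat with (S (length ys')) by lia.
         replace (S (S (length ys')) + 1)%nat with (S (S (S (length ys')))) by lia.
         replace (S (S (length ys')) - 2)%nat with (length ys') by lia.
         change (prodP t (y0 :: y :: ys')) with (Pf t y0 * prodP t (y::ys')).
         change (prodP t (yk :: y :: ys')) with (Pf t yk * prodP t (y::ys')).
         simpl (prodP t [yk]). simpl pow.
         unfold Pf in *. field. repeat split; auto. intro; apply Hne; lra. }
  rewrite RInt_scalR. 2: { apply ex_RInt_minusR; eapply PhiLn_ex; eauto. }
  rewrite RInt_minusR by (eapply PhiLn_ex; eauto). unfold Rdiv. exact (Rmult_comm _ _).
Qed.

Lemma Tln_cont lo hi y0 ys yk : 0 < lo -> inI lo hi (y0 :: ys ++ [yk]) ->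
  forall eps, 0 < eps -> exists d, 0 < d /\ forall y, lo <= y <= hi -> Rabs (y - yk) < d ->
  Rabs (Tln (y0 :: ys ++ [y]) - Tln (y0 :: ys ++ [yk])) < eps.
Proof.
  intros Hlo HI.
  destruct (inI_app_inv lo hi y0 ys yk HI) as [Hk [H0 [Hyk Hy0]]].
  set (A := fun t => (-1) ^ (length ys + 2) * t ^ (length ys) / prodP t (y0 :: ys)).
  assert (HE : forall y, lo <= y <= hi -> Tln (y0 :: ys ++ [y]) = RInt (fun t => A t / Pf t y) 0 1).
  { intros y Hy. unfold Tln. apply RInt_extR. intros t Ht.
    rewrite Rmin_left in Ht by lra. rewrite Rmax_right in Ht by lra.
    assert (Ht' : 0 <= t <= 1) by lra.
    rewrite PhiLn_long by (simpl; rewrite length_app; simpl; lia).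
    rewrite app_comm_cons, prodP_app, length_app. simpl length.
    replace (S (length ys) + 1 - 2)%nat with (length ys) by lia.
    replace (S (length ys) + 1)%nat with (length ys + 2)%nat by lia.
    unfold A. simpl (prodP t [y]).
    assert (Pf t y <> 0) by (apply (Pf_ne0 t y lo); lra).
    assert (prodP t (y0::ys) <> 0) by (pose proof (prodP_pos t (y0::ys) lo hi Ht' Hlo H0); lra).
    field. auto. }
  intros eps Heps.
  set (mn := Rmin 1 lo). assert (Hmn : 0 < mn) by (apply mn_pos; auto).
  destruct (Tcont_gen lo hi A (/ mn ^ (length (y0::ys))) yk Hlo Hyk) with eps as [d [Hd Hdd]]; auto.
  - apply Rlt_le, Rinv_0_lt_compat, pow_lt; auto.
  - intros t Ht. unfold A. apply continuity_pt_div.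
    apply continuity_pt_mult. apply continuity_pt_const; intros u v; auto. apply cont_pow_t.
    apply cont_prodP. pose proof (prodP_pos t (y0::ys) lo hi Ht Hlo H0). lra.
  - intros t Ht. unfold A. unfold Rdiv. rewrite !Rabs_mult, pow_1_abs, Rmult_1_l, Rabs_inv.
    pose proof (prodP_lb t (y0::ys) lo hi Ht Hlo H0). fold mn in H.
    assert (0 < mn ^ length (y0::ys)) by (apply pow_lt; auto).
    rewrite (Rabs_pos_eq (prodP _ _)) by lra.
    rewrite Rabs_pos_eq by (apply pow_le; lra).
    assert (t ^ length ys <= 1) by (apply pow_le1; lra).
    assert (/ prodP t (y0 :: ys) <= / mn ^ length (y0::ys)) by (apply Rinv_le_contravar; lra).
    assert (0 <= t ^ length ys) by (apply pow_le; lra).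
    assert (0 <= / prodP t (y0 :: ys)) by (apply Rlt_le, Rinv_0_lt_compat; lra).
    nra.
  - exists d. split; auto. intros y Hy Hyd. rewrite !HE; auto.
Qed.

Theorem dd_ln lo hi L : 0 < lo < hi -> inI lo hi L -> L <> [] -> dd L ln = Tln L.
Proof.
  intros Hlh HI HL. destruct L as [|y0 ys]; [congruence|].
  rewrite dd_cons.
  rewrite (sint_ext _ (lnD (length ys)) lo hi).
  2: { intros z Hz. apply Dn_ln. lra. }
  2: { apply invS_01; auto. }
  apply (@HG_main lnD lo hi Tln); auto; try lra.
  - intros j z Hz. apply lnD_deriv. lra.
  - intros j. apply lnD_bound. lra.
  - intros y0' Hy. apply Tln_single. lra.
  - intros. apply Tln_rec with lo hi; auto. lra.
  - intros. eapply Tln_cont; eauto. lra.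
Qed.

Lemma MVT_signed f f' a h : h <> 0 ->
  (forall c, Rmin a (a+h) <= c <= Rmax a (a+h) -> derivable_pt_lim f c (f' c)) ->
  exists c, f (a+h) - f a = f' c * h /\ Rabs (c - a) <= Rabs h.
Proof.
  intros Hh Hd. destruct (Rlt_or_le 0 h) as [Hp|Hn].
  - destruct (MVT_cor2 f f' a (a+h)) as [c [E Hc]]. lra.
    { intros c Hc. apply Hd. rewrite Rmin_left, Rmax_right; lra. }
    exists c. split. rewrite E. ring. rewrite !Rabs_pos_eq; lra.
  - destruct (MVT_cor2 f f' (a+h) a) as [c [E Hc]]. lra.
    { intros c Hc. apply Hd. rewrite Rmin_right, Rmax_left; lra. }
    exists c. split. replace (f (a+h) - f a) with (- (f a - f (a+h))) by ring. rewrite E. ring.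
    rewrite (Rabs_left h) by lra. unfold Rabs; destruct Rcase_abs; lra.
Qed.

Lemma param_deriv (f g : R -> R -> R) z0 d C : 0 < d -> 0 <= C ->
  (forall z t, Rabs (z - z0) < d -> 0 <= t <= 1 -> derivable_pt_lim (fun z => f z t) z (g z t)) ->
  (forall z t, Rabs (z - z0) < d -> 0 <= t <= 1 -> Rabs (g z t - g z0 t) <= C * Rabs (z - z0)) ->
  (forall z, Rabs (z - z0) < d -> ex_RInt (f z) 0 1) ->
  ex_RInt (g z0) 0 1 ->
  derivable_pt_lim (fun z => RInt (f z) 0 1) z0 (RInt (g z0) 0 1).
Proof.
  intros Hd HC HD HL Hex Hexg eps Heps.
  assert (Hd' : 0 < Rmin d (eps / (C+1))) by (apply Rmin_glb_lt; [lra|apply Rdiv_lt_0_compat; lra]).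
  exists (mkposreal _ Hd'). intros h Hh0 Hh. simpl in Hh.
  assert (Hh1 : Rabs h < d) by (eapply Rlt_le_trans; [apply Hh|apply Rmin_l]).
  assert (Hh2 : Rabs h < eps / (C+1)) by (eapply Rlt_le_trans; [apply Hh|apply Rmin_r]).
  assert (Hz : Rabs (z0 + h - z0) < d) by (replace (z0+h-z0) with h by ring; auto).
  assert (Hz0 : Rabs (z0 - z0) < d) by (rewrite Rminus_diag, Rabs_R0; lra).
  replace ((RInt (f (z0 + h)) 0 1 - RInt (f z0) 0 1) / h - RInt (g z0) 0 1)
    with (RInt (fun t => (f (z0+h) t - f z0 t) / h - g z0 t) 0 1).
  2: { rewrite RInt_minusR. unfold Rdiv. rewrite (RInt_extR (fun t => (f (z0+h) t - f z0 t) * / h)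
         (fun t => / h * (f (z0+h) t - f z0 t))) by (intros; ring).
       rewrite RInt_scalR, RInt_minusR; auto. match goal with |- ?a = ?b => change (@eq R a b) end. ring.
       apply ex_RInt_minusR; auto.
       apply (ex_RInt_extR (fun t => / h * (f (z0+h) t - f z0 t))). intros; unfold Rdiv; ring.
       apply ex_RInt_scalR, ex_RInt_minusR; auto. auto. }
  apply Rle_lt_trans with ((1 - 0) * (C * Rabs h)).
  - apply abs_RInt_le_const. lra.
    + apply ex_RInt_minusR; auto.
      apply (ex_RInt_extR (fun t => / h * (f (z0+h) t - f z0 t))). intros; unfold Rdiv; ring.
      apply ex_RInt_scalR, ex_RInt_minusR; auto.
    + intros t Ht.
      destruct (MVT_signed (fun z => f z t) (fun z => g z t) z0 h Hh0) as [c [Ec Hc]].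
      { intros c Hc. apply HD; auto. unfold Rmin, Rmax in Hc. destruct Rle_dec;
        unfold Rabs in *; repeat destruct Rcase_abs; lra. }
      simpl in Ec. rewrite Ec. replace (g c t * h / h) with (g c t) by (field; auto).
      eapply Rle_trans. apply HL; auto. unfold Rabs in *; repeat destruct Rcase_abs; lra.
      apply Rmult_le_compat_l; auto.
  - rewrite Rminus_0_r, Rmult_1_l.
    apply Rle_lt_trans with (C * (eps/(C+1))). apply Rmult_le_compat_l; lra.
    apply Rlt_le_trans with ((C+1) * (eps/(C+1))). apply Rmult_lt_compat_r.
    apply Rdiv_lt_0_compat; lra. lra. right; field; lra.
Qed.

Definition kap (j : nat) (z t : R) : R := (-t) ^ j * INR (fact j) / Pf t z ^ (S j).

Lemma kap_deriv j z t : Pf t z <> 0 -> derivable_pt_lim (fun z => kap j z t) z (kap (S j) z t).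
Proof.
  intros HP. apply is_derive_Reals. unfold kap, Pf in *.
  auto_derive. { apply Rmult_integral_contrapositive_currified. replace (z + - (1)) with (z - 1) by ring. auto. apply pow_nonzero. replace (z + - (1)) with (z - 1) by ring. auto. }
  replace (z + - (1)) with (z - 1) by ring.
  rewrite fact_simpl, mult_INR, S_INR. simpl pow.
  assert (E : forall (j:nat) t P, P <> 0 -> P ^ j <> 0 ->
    ((-t) ^ j * INR (fact j) * (- (1 * ((INR j + 1) * P ^ j * (t * 1))) * / (P * P ^ j * (P * P ^ j))))
    = (- t * (-t) ^ j * ((INR j + 1) * INR (fact j)) / (P * (P * P ^ j)))).
  { intros. field. auto. }
  replace (match j with 0%nat => 1 | S _ => INR j + 1 end) with (INR j + 1) by (destruct j; simpl; ring).
  set (P := 1 + t * (z - 1)) in *. assert (P ^ j <> 0) by (apply pow_nonzero; auto).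
  field. auto.
Qed.

Lemma kap_bound j z t lo : 0 <= t <= 1 -> 0 < lo <= z ->
  Rabs (kap j z t) <= INR (fact j) / Rmin 1 lo ^ (S j).
Proof.
  intros Ht Hz. unfold kap. pose proof (Pf_lb t z lo Ht Hz). pose proof (mn_pos lo (proj1 Hz)).
  unfold Rdiv. rewrite !Rabs_mult, Rabs_inv, <- RPow_abs, Rabs_Ropp, (Rabs_pos_eq t) by lra.
  rewrite (Rabs_pos_eq (INR _)) by apply pos_INR.
  rewrite <- RPow_abs, Rabs_pos_eq by lra.
  assert (t ^ j <= 1) by (apply pow_le1; lra). assert (0 <= t^j) by (apply pow_le; lra).
  assert (/ Pf t z ^ S j <= / Rmin 1 lo ^ S j).
  { apply Rinv_le_contravar. apply pow_lt; lra. apply pow_incr; lra. }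
  assert (0 <= / Pf t z ^ S j) by (apply Rlt_le, Rinv_0_lt_compat, pow_lt; lra).
  pose proof (pos_INR (fact j)).
  apply Rle_trans with (1 * INR (fact j) * / Pf t z ^ S j).
  apply Rmult_le_compat_r; auto. apply Rmult_le_compat_r; auto.
  rewrite Rmult_1_l. apply Rmult_le_compat_l; auto.
Qed.

Lemma kap_cont j z t : 0 < z -> 0 <= t <= 1 -> continuity_pt (kap j z) t.
Proof.
  intros Hz Ht. unfold kap. apply continuity_pt_div.
  - apply continuity_pt_mult. 2: apply continuity_pt_const; intros u v; auto.
    apply (continuity_pt_comp (fun t => -t) (fun u => u ^ j)). apply continuity_pt_opp, continuity_pt_id.
    apply cont_pow_t.
  - apply (continuity_pt_comp (fun t => Pf t z) (fun u => u ^ S j)). apply cont_Pf. apply cont_pow_t.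
  - apply pow_nonzero. apply (Pf_ne0 t z z); lra.
Qed.

Lemma kap_ex j z : 0 < z -> ex_RInt (kap j z) 0 1.
Proof. intros. apply ex_RInt_cont01. intros; apply kap_cont; auto. Qed.

Definition L0D j z := RInt (kap j z) 0 1.

Lemma L0D_deriv j z : 0 < z -> derivable_pt_lim (L0D j) z (L0D (S j) z).
Proof.
  intros Hz. unfold L0D.
  apply (param_deriv (kap j) (kap (S j)) z (z/2) (INR (fact (S (S j))) / Rmin 1 (z/2) ^ (S (S (S j))))).
  - lra.
  - apply Rdiv_le_0_compat. apply pos_INR. apply pow_lt, mn_pos; lra.
  - intros z' t Hz' Ht. apply kap_deriv. apply (Pf_ne0 t z' (z/2)); auto.
    unfold Rabs in Hz'; destruct Rcase_abs; lra.
  - intros z' t Hz' Ht.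
    apply (lip_of_deriv (fun z => kap (S j) z t) (fun z => kap (S (S j)) z t) (Rmin z z') (Rmax z z')).
    + intros c Hc. apply kap_deriv. apply (Pf_ne0 t c (z/2)); auto.
      unfold Rmin, Rmax in Hc; destruct Rle_dec; unfold Rabs in Hz'; destruct Rcase_abs; lra.
    + intros c Hc. apply kap_bound; auto.
      unfold Rmin, Rmax in Hc; destruct Rle_dec; unfold Rabs in Hz'; destruct Rcase_abs; lra.
    + unfold Rmin, Rmax; destruct Rle_dec; lra.
    + unfold Rmin, Rmax; destruct Rle_dec; lra.
  - intros z' Hz'. apply kap_ex. unfold Rabs in Hz'; destruct Rcase_abs; lra.
  - apply kap_ex; auto.
Qed.

Lemma L0D_bound j lo hi : 0 < lo -> exists B, 0 <= B /\ forall z, lo <= z <= hi -> Rabs (L0D j z) <= B.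
Proof.
  intros Hlo. exists (INR (fact j) / Rmin 1 lo ^ (S j)). split.
  { apply Rdiv_le_0_compat. apply pos_INR. apply pow_lt, mn_pos; lra. }
  intros z Hz. unfold L0D. replace (INR (fact j) / Rmin 1 lo ^ S j) with ((1 - 0) * (INR (fact j) / Rmin 1 lo ^ S j)) by ring.
  apply abs_RInt_le_const. lra. apply kap_ex; lra.
  intros t Ht. apply kap_bound; auto. lra.
Qed.

Lemma L0_L0D z : 0 < z -> L0 z = L0D 0 z.
Proof.
  intros Hz. unfold L0D, L0.
  rewrite (RInt_extR _ (fun t => 1 / (1 + t * (z - 1)))).
  2: { intros t Ht. unfold kap, Pf. simpl. field.
       rewrite Rmin_left in Ht by lra. rewrite Rmax_right in Ht by lra.
       pose proof (Pf_ne0 t z z ltac:(lra) ltac:(lra)). unfold Pf in H. auto. }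
  destruct Req_EM_T as [E|E].
  - subst. rewrite (RInt_extR _ (fun _ => 1)). 2: { intros. replace (1 + x * (1 - 1)) with 1 by ring. field. }
    rewrite RInt_const. unfold scal; simpl. unfold mult; simpl. ring.
  - assert (HP : forall t, 0 <= t <= 1 -> 0 < 1 + t * (z - 1)).
    { intros t Ht. pose proof (Pf_lb t z z Ht ltac:(lra)). pose proof (mn_pos z Hz). unfold Pf in *. lra. }
    assert (HI : is_RInt (fun t => 1 / (1 + t * (z - 1))) 0 1
       (minus ((fun t => ln (1 + t*(z-1)) / (z - 1)) 1) ((fun t => ln (1 + t*(z-1)) / (z - 1)) 0))).
    { apply (@is_RInt_derive R_CompleteNormedModule (fun t => ln (1 + t*(z-1)) / (z - 1))).
      - intros x Hx. rewrite Rmin_left in Hx by lra. rewrite Rmax_right in Hx by lra.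
        auto_derive. apply HP; auto. field. split. specialize (HP x Hx). lra. lra.
      - intros x Hx. rewrite Rmin_left in Hx by lra. rewrite Rmax_right in Hx by lra.
        apply continuity_pt_filterlim. apply continuity_pt_div.
        apply continuity_pt_const; intros u v; auto. apply (cont_Pf z x).
        specialize (HP x Hx). lra. }
    rewrite (is_RInt_unique _ _ _ _ HI). unfold minus, plus, opp; simpl.
    replace (1 + 1 * (z - 1)) with z by ring. replace (1 + 0 * (z-1)) with 1 by ring.
    rewrite ln_1. field. lra.
Qed.

Lemma Dn_L0 j z : 0 < z -> Dn j L0 z = L0D j z.
Proof.
  intros Hz. apply (Dn_family L0 L0D 0 (z+1)).
  - intros x Hx. apply L0_L0D. lra.
  - intros j' x Hx. apply L0D_deriv; lra.
  - lra.
Qed.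

Definition Psi (L : list R) (t : R) : R := (-t) ^ (length L - 1) / prodP t L.
Definition T0L L := RInt (Psi L) 0 1.

Lemma Psi_cont lo hi L : 0 < lo -> inI lo hi L -> forall t, 0 <= t <= 1 -> continuity_pt (Psi L) t.
Proof.
  intros Hlo HI t Ht. unfold Psi. apply continuity_pt_div.
  - apply (continuity_pt_comp (fun t => -t) (fun u => u ^ _)). apply continuity_pt_opp, continuity_pt_id.
    apply cont_pow_t.
  - apply cont_prodP.
  - pose proof (prodP_pos t L lo hi Ht Hlo HI). lra.
Qed.

Lemma Psi_ex lo hi L : 0 < lo -> inI lo hi L -> ex_RInt (Psi L) 0 1.
Proof. intros. apply ex_RInt_cont01. apply Psi_cont with lo hi; auto. Qed.

Lemma T0L_single y0 : 0 < y0 -> T0L [y0] = L0D 0 y0.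
Proof.
  intros Hy. unfold T0L, L0D. apply RInt_extR. intros t Ht.
  rewrite Rmin_left in Ht by lra. rewrite Rmax_right in Ht by lra.
  unfold Psi, kap. simpl. field. apply (Pf_ne0 t y0 y0); lra.
Qed.

Lemma T0L_rec lo hi y0 ys yk : 0 < lo -> inI lo hi (y0 :: ys ++ [yk]) -> y0 <> yk ->
  T0L (y0 :: ys ++ [yk]) = (T0L (yk :: ys) - T0L (y0 :: ys)) / (yk - y0).
Proof.
  intros Hlo HI Hne.
  destruct (inI_app_inv lo hi y0 ys yk HI) as [Hk [H0 [Hyk Hy0]]].
  unfold T0L.
  rewrite (RInt_extR _ (fun t => / (yk - y0) * (Psi (yk :: ys) t - Psi (y0 :: ys) t))).
  2: { intros t Ht. rewrite Rmin_left in Ht by lra. rewrite Rmax_right in Ht by lra.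
       assert (Ht' : 0 <= t <= 1) by lra.
       assert (P0 : Pf t y0 <> 0) by (apply (Pf_ne0 t y0 lo); lra).
       assert (Pk : Pf t yk <> 0) by (apply (Pf_ne0 t yk lo); lra).
       assert (Q : prodP t ys <> 0).
       { inversion H0; subst. pose proof (prodP_pos t ys lo hi Ht' Hlo H3). lra. }
       unfold Psi. rewrite app_comm_cons, prodP_app, length_app. simpl length.
       replace (S (length ys) + 1 - 1)%nat with (S (length ys)) by lia.
       replace (S (length ys) - 1)%nat with (length ys) by lia.
       simpl prodP. simpl pow.
       unfold Pf in *. field. repeat split; auto. intro; apply Hne; lra. }
  rewrite RInt_scalR. 2: { apply ex_RInt_minusR; eapply Psi_ex; eauto. }
  rewrite RInt_minusR by (eapply Psi_ex; eauto). unfold Rdiv. exact (Rmult_comm _ _).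
Qed.

Lemma T0L_cont lo hi y0 ys yk : 0 < lo -> inI lo hi (y0 :: ys ++ [yk]) ->
  forall eps, 0 < eps -> exists d, 0 < d /\ forall y, lo <= y <= hi -> Rabs (y - yk) < d ->
  Rabs (T0L (y0 :: ys ++ [y]) - T0L (y0 :: ys ++ [yk])) < eps.
Proof.
  intros Hlo HI.
  destruct (inI_app_inv lo hi y0 ys yk HI) as [Hk [H0 [Hyk Hy0]]].
  set (A := fun t => (-t) ^ (length ys + 1) / prodP t (y0 :: ys)).
  assert (HE : forall y, lo <= y <= hi -> T0L (y0 :: ys ++ [y]) = RInt (fun t => A t / Pf t y) 0 1).
  { intros y Hy. unfold T0L. apply RInt_extR. intros t Ht.
    rewrite Rmin_left in Ht by lra. rewrite Rmax_right in Ht by lra.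
    assert (Ht' : 0 <= t <= 1) by lra.
    unfold Psi. rewrite app_comm_cons, prodP_app, length_app. simpl length.
    replace (S (length ys) + 1 - 1)%nat with (length ys + 1)%nat by lia.
    unfold A. simpl (prodP t [y]).
    assert (Pf t y <> 0) by (apply (Pf_ne0 t y lo); lra).
    assert (prodP t (y0::ys) <> 0) by (pose proof (prodP_pos t (y0::ys) lo hi Ht' Hlo H0); lra).
    field. auto. }
  intros eps Heps.
  set (mn := Rmin 1 lo). assert (Hmn : 0 < mn) by (apply mn_pos; auto).
  destruct (Tcont_gen lo hi A (/ mn ^ (length (y0::ys))) yk Hlo Hyk) with eps as [d [Hd Hdd]]; auto.
  - apply Rlt_le, Rinv_0_lt_compat, pow_lt; auto.
  - intros t Ht. unfold A. apply continuity_pt_div.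
    apply (continuity_pt_comp (fun t => -t) (fun u => u ^ _)). apply continuity_pt_opp, continuity_pt_id.
    apply cont_pow_t.
    apply cont_prodP. pose proof (prodP_pos t (y0::ys) lo hi Ht Hlo H0). lra.
  - intros t Ht. unfold A. unfold Rdiv. rewrite !Rabs_mult, Rabs_inv, <- RPow_abs, Rabs_Ropp.
    pose proof (prodP_lb t (y0::ys) lo hi Ht Hlo H0). fold mn in H.
    assert (0 < mn ^ length (y0::ys)) by (apply pow_lt; auto).
    rewrite (Rabs_pos_eq (prodP _ _)) by lra.
    rewrite (Rabs_pos_eq t) by lra.
    assert (t ^ (length ys + 1) <= 1) by (apply pow_le1; lra).
    assert (/ prodP t (y0 :: ys) <= / mn ^ length (y0::ys)) by (apply Rinv_le_contravar; lra).
    assert (0 <= t ^ (length ys + 1)) by (apply pow_le; lra).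
    assert (0 <= / prodP t (y0 :: ys)) by (apply Rlt_le, Rinv_0_lt_compat; lra).
    nra.
  - exists d. split; auto. intros y Hy Hyd. rewrite !HE; auto.
Qed.

Theorem dd_L0 lo hi L : 0 < lo < hi -> inI lo hi L -> L <> [] -> dd L L0 = T0L L.
Proof.
  intros Hlh HI HL. destruct L as [|y0 ys]; [congruence|].
  rewrite dd_cons.
  rewrite (sint_ext _ (L0D (length ys)) lo hi).
  2: { intros z Hz. apply Dn_L0. lra. }
  2: { apply invS_01; auto. }
  apply (@HG_main L0D lo hi T0L); auto; try lra.
  - intros j z Hz. apply L0D_deriv. lra.
  - intros j. apply L0D_bound. lra.
  - intros y0' Hy. apply T0L_single. lra.
  - intros. apply T0L_rec with lo hi; auto. lra.
  - intros. eapply T0L_cont; eauto. lra.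
Qed.

Lemma prodP_repeat t y k : prodP t (repeat y k) = Pf t y ^ k.
Proof. induction k; simpl; auto. rewrite IHk; ring. Qed.

Lemma Pf1 t : Pf t 1 = 1.
Proof. unfold Pf; ring. Qed.

Lemma neg1_sq n : (-1) ^ n * (-1) ^ n = 1.
Proof. rewrite <- Rpow_mult_distr. replace (-1 * -1) with 1 by ring. apply pow1. Qed.

Lemma Forall_repeat (P : R -> Prop) x k : P x -> List.Forall P (repeat x k).
Proof. intros. induction k; simpl; constructor; auto. Qed.

Definition Kf (a0 a1 a2 : nat) a b t :=
  t ^ (a0 + a1 + a2 + 1) / (Pf t a ^ (S a1) * Pf t b ^ (S a2)).

Definition lo3 a b := Rmin 1 (Rmin a b) / 2.
Definition hi3 a b := Rmax 1 (Rmax a b) + 1.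

Lemma lohi3 a b : 0 < a -> 0 < b -> 0 < lo3 a b < hi3 a b.
Proof.
  intros. unfold lo3, hi3, Rmin, Rmax. repeat destruct Rle_dec; lra.
Qed.

Lemma in3 a b y : 0 < a -> 0 < b -> (y = 1 \/ y = a \/ y = b) -> lo3 a b <= y <= hi3 a b.
Proof.
  intros. unfold lo3, hi3, Rmin, Rmax. repeat destruct Rle_dec; lra.
Qed.

Lemma inI_pts a b k l q : 0 < a -> 0 < b -> inI (lo3 a b) (hi3 a b) (pts k a l b q).
Proof.
  intros. unfold inI, pts. apply List.Forall_app; split; [|apply List.Forall_app; split];
  apply Forall_repeat; apply in3; auto.
Qed.

Lemma Kf_cont a0 a1 a2 a b t : 0 < a -> 0 < b -> 0 <= t <= 1 -> continuity_pt (Kf a0 a1 a2 a b) t.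
Proof.
  intros Ha Hb Ht. unfold Kf. apply continuity_pt_div.
  - apply cont_pow_t.
  - apply continuity_pt_mult.
    + apply (continuity_pt_comp (fun t => Pf t a) (fun u => u ^ _)). apply cont_Pf. apply cont_pow_t.
    + apply (continuity_pt_comp (fun t => Pf t b) (fun u => u ^ _)). apply cont_Pf. apply cont_pow_t.
  - apply Rmult_integral_contrapositive_currified; apply pow_nonzero.
    apply (Pf_ne0 t a a); lra. apply (Pf_ne0 t b b); lra.
Qed.

Lemma V_ln a0 a1 a2 a b : 0 < a -> 0 < b ->
  (-1) ^ (a0 + a1 + a2 + 1) * dd (pts (S a0) a (S a1) b (S a2)) ln = RInt (Kf a0 a1 a2 a b) 0 1.
Proof.
  intros Ha Hb. pose proof (lohi3 a b Ha Hb).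
  rewrite (dd_ln (lo3 a b) (hi3 a b)); auto.
  2: apply inI_pts; auto.
  2: { unfold pts. simpl. discriminate. }
  unfold Tln. rewrite <- RInt_scalR by (eapply PhiLn_ex; [|apply inI_pts]; auto; lra).
  apply RInt_extR. intros t Ht.
  assert (HL : length (pts (S a0) a (S a1) b (S a2)) = (a0 + a1 + a2 + 3)%nat).
  { unfold pts. rewrite !length_app, !repeat_length. lia. }
  rewrite PhiLn_long by lia. rewrite HL.
  replace (a0 + a1 + a2 + 3 - 2)%nat with (a0 + a1 + a2 + 1)%nat by lia.
  unfold pts. rewrite !prodP_app, !prodP_repeat, Pf1, pow1.
  replace (a0 + a1 + a2 + 3)%nat with ((a0 + a1 + a2 + 1) + 2)%nat by lia.
  rewrite (pow_add (-1) (a0 + a1 + a2 + 1) 2). unfold Kf.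
  assert (E := neg1_sq (a0+a1+a2+1)).
  set (u := (-1)^(a0+a1+a2+1)) in *. set (v := t^(a0+a1+a2+1)).
  set (D := Pf t a ^ S a1 * Pf t b ^ S a2).
  rewrite Rmult_1_l.
  replace (u * (u * (-1)^2 * v / D)) with ((u*u) * (v / D)) by (unfold Rdiv; ring).
  rewrite E. ring.
Qed.

Lemma V_L0 a0 a1 a2 a b : 0 < a -> 0 < b ->
  (-1) ^ (a0 + a1 + a2 + 1) * dd (pts a0 a (S a1) b (S a2)) L0 = RInt (Kf a0 a1 a2 a b) 0 1.
Proof.
  intros Ha Hb. pose proof (lohi3 a b Ha Hb).
  rewrite (dd_L0 (lo3 a b) (hi3 a b)); auto.
  2: apply inI_pts; auto.
  2: { unfold pts. destruct a0; simpl; discriminate. }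
  unfold T0L. rewrite <- RInt_scalR by (eapply Psi_ex; [|apply inI_pts]; auto; lra).
  apply RInt_extR. intros t Ht.
  assert (HL : length (pts a0 a (S a1) b (S a2)) = (a0 + a1 + a2 + 2)%nat).
  { unfold pts. rewrite !length_app, !repeat_length. lia. }
  unfold Psi. rewrite HL.
  replace (a0 + a1 + a2 + 2 - 1)%nat with (a0 + a1 + a2 + 1)%nat by lia.
  unfold pts. rewrite !prodP_app, !prodP_repeat, Pf1, pow1.
  replace (-t) with (-1 * t) by ring. rewrite Rpow_mult_distr.
  unfold Kf.
  assert (E := neg1_sq (a0+a1+a2+1)).
  set (u := (-1)^(a0+a1+a2+1)) in *. set (v := t^(a0+a1+a2+1)).
  set (D := Pf t a ^ S a1 * Pf t b ^ S a2).
  rewrite Rmult_1_l.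
  replace (u * (u * v / D)) with ((u*u) * (v / D)) by (unfold Rdiv; ring).
  rewrite E. ring.
Qed.

Lemma pow_divR x y n : y <> 0 -> (x / y) ^ n = x ^ n / y ^ n.
Proof.
  intros Hy. induction n; simpl. field. rewrite IHn. field. split; auto. apply pow_nonzero; auto.
Qed.

Lemma Hint_cont a0 a1 a2 a b x : 0 < a -> 0 < b -> 0 <= x -> continuity_pt (Hint a0 a1 a2 a b) x.
Proof.
  intros Ha Hb Hx. unfold Hint. apply continuity_pt_div.
  - apply cont_pow_t.
  - apply continuity_pt_mult; [apply continuity_pt_mult|].
    + apply (continuity_pt_comp (fun x => 1 + x) (fun u => u ^ _)).
      apply continuity_pt_plus. apply continuity_pt_const; intros u v; auto. apply continuity_pt_id.
      apply cont_pow_t.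
    + apply (continuity_pt_comp (fun x => 1 + a * x) (fun u => u ^ _)).
      apply continuity_pt_plus. apply continuity_pt_const; intros u v; auto.
      apply continuity_pt_scal, continuity_pt_id. apply cont_pow_t.
    + apply (continuity_pt_comp (fun x => 1 + b * x) (fun u => u ^ _)).
      apply continuity_pt_plus. apply continuity_pt_const; intros u v; auto.
      apply continuity_pt_scal, continuity_pt_id. apply cont_pow_t.
  - repeat apply Rmult_integral_contrapositive_currified; apply pow_nonzero; nra.
Qed.

Lemma Hint_ex a0 a1 a2 a b T : 0 < a -> 0 < b -> 0 <= T -> ex_RInt (Hint a0 a1 a2 a b) 0 T.
Proof.
  intros. apply (@ex_RInt_continuous R_CompleteNormedModule). intros z Hz.
  rewrite Rmin_left in Hz by lra. rewrite Rmax_right in Hz by lra.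
  apply continuity_pt_filterlim. apply Hint_cont; auto; lra.
Qed.

Lemma Hint_subst a0 a1 a2 a b y : 0 < a -> 0 < b -> 0 <= y < 1 ->
  / (1 - y) ^ 2 * Hint a0 a1 a2 a b (y / (1 - y)) = Kf a0 a1 a2 a b y.
Proof.
  intros Ha Hb Hy. unfold Hint, Kf.
  set (w := 1 - y). assert (Hw : 0 < w) by (unfold w; lra).
  assert (PA : 0 < Pf y a) by (pose proof (Pf_lb y a a ltac:(lra) ltac:(lra)); pose proof (mn_pos a Ha); lra).
  assert (PB : 0 < Pf y b) by (pose proof (Pf_lb y b b ltac:(lra) ltac:(lra)); pose proof (mn_pos b Hb); lra).
  replace (1 + y / w) with (1 / w) by (unfold w; field; lra).
  replace (1 + a * (y / w)) with (Pf y a / w) by (unfold w, Pf; field; lra).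
  replace (1 + b * (y / w)) with (Pf y b / w) by (unfold w, Pf; field; lra).
  rewrite !pow_divR by lra. rewrite pow1.
  replace (S a1) with (a1+1)%nat by lia. replace (S a2) with (a2+1)%nat by lia.
  clearbody w.
  set (M := (a0 + a1 + a2 + 1)%nat).
  assert (Ew : w ^ (a0 + 1) * w ^ (a1 + 1) * w ^ (a2 + 1) = w ^ M * w ^ 2).
  { rewrite <- !pow_add. f_equal. unfold M. lia. }
  assert (H0 : w ^ (a0+1) <> 0) by (apply pow_nonzero; lra).
  assert (H1 : w ^ (a1+1) <> 0) by (apply pow_nonzero; lra).
  assert (H2 : w ^ (a2+1) <> 0) by (apply pow_nonzero; lra).
  assert (H3 : w ^ M <> 0) by (apply pow_nonzero; lra).
  assert (H4 : Pf y a ^ (a1+1) <> 0) by (apply pow_nonzero; lra).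
  assert (H5 : Pf y b ^ (a2+1) <> 0) by (apply pow_nonzero; lra).
  assert (H6 : w ^ 2 <> 0) by (apply pow_nonzero; lra).
  transitivity (y ^ M * (w ^ (a0 + 1) * w ^ (a1 + 1) * w ^ (a2 + 1)) / (w ^ 2 * w ^ M * (Pf y a ^ (a1 + 1) * Pf y b ^ (a2 + 1)))).
  { field. repeat split; auto; lra. }
  rewrite Ew. field. repeat split; auto; lra.
Qed.

Lemma Kf_bound a0 a1 a2 a b t : 0 < a -> 0 < b -> 0 <= t <= 1 ->
  Rabs (Kf a0 a1 a2 a b t) <= / (Rmin 1 a ^ S a1 * Rmin 1 b ^ S a2).
Proof.
  intros Ha Hb Ht. unfold Kf.
  pose proof (Pf_lb t a a Ht ltac:(lra)). pose proof (Pf_lb t b b Ht ltac:(lra)).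
  pose proof (mn_pos a Ha). pose proof (mn_pos b Hb).
  assert (X1 : Rmin 1 a ^ S a1 <= Pf t a ^ S a1) by (apply pow_incr; lra).
  assert (X2 : Rmin 1 b ^ S a2 <= Pf t b ^ S a2) by (apply pow_incr; lra).
  assert (Y1 : 0 < Rmin 1 a ^ S a1) by (apply pow_lt; lra).
  assert (Y2 : 0 < Rmin 1 b ^ S a2) by (apply pow_lt; lra).
  unfold Rdiv. rewrite Rabs_mult, Rabs_inv, Rabs_pos_eq by (apply pow_le; lra).
  rewrite Rabs_pos_eq by nra.
  assert (Z : / (Pf t a ^ S a1 * Pf t b ^ S a2) <= / (Rmin 1 a ^ S a1 * Rmin 1 b ^ S a2)).
  { apply Rinv_le_contravar. nra. apply Rmult_le_compat; lra. }
  assert (t ^ (a0 + a1 + a2 + 1) <= 1) by (apply pow_le1; lra).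
  assert (0 <= t ^ (a0 + a1 + a2 + 1)) by (apply pow_le; lra).
  assert (0 <= / (Pf t a ^ S a1 * Pf t b ^ S a2)) by (apply Rlt_le, Rinv_0_lt_compat; nra).
  nra.
Qed.

Lemma Kf_ex a0 a1 a2 a b : 0 < a -> 0 < b -> ex_RInt (Kf a0 a1 a2 a b) 0 1.
Proof. intros. apply ex_RInt_cont01. intros; apply Kf_cont; auto. Qed.

Lemma improper_K a0 a1 a2 a b : 0 < a -> 0 < b ->
  improper_int0 (Hint a0 a1 a2 a b) (RInt (Kf a0 a1 a2 a b) 0 1).
Proof.
  intros Ha Hb. split.
  - intros T HT. constructor. apply continuity_implies_RiemannInt; auto.
    intros x Hx. apply Hint_cont; auto; lra.
  - intros eps Heps.
    set (C := / (Rmin 1 a ^ S a1 * Rmin 1 b ^ S a2)).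
    assert (HC : 0 < C).
    { unfold C. apply Rinv_0_lt_compat. apply Rmult_lt_0_compat; apply pow_lt, mn_pos; auto. }
    exists (C / eps + 1). intros T HT.
    assert (HT0 : 0 < T). { assert (0 < C/eps) by (apply Rdiv_lt_0_compat; auto). lra. }
    set (s1 := T / (1 + T)).
    assert (Hs1 : 0 < s1 < 1).
    { unfold s1. split. apply Rdiv_lt_0_compat; lra.
      apply Rmult_lt_reg_r with (1+T). lra. unfold Rdiv. rewrite Rmult_assoc, Rinv_l by lra. lra. }
    rewrite Rint_RInt by (apply Hint_ex; lra).
    assert (Hsub : RInt (Hint a0 a1 a2 a b) 0 T = RInt (Kf a0 a1 a2 a b) 0 s1).
    { assert (Hg : forall y, 0 <= y <= s1 -> is_derive (fun y => y / (1 - y)) y (/ (1 - y) ^ 2)).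
      { intros y Hy. auto_derive. lra. field. lra. }
      assert (HC2 := RInt_comp (Hint a0 a1 a2 a b) (fun y => y / (1 - y)) (fun y => / (1 - y) ^ 2) 0 s1).
      cbv beta in HC2. replace (0 / (1 - 0)) with 0 in HC2 by field.
      replace (s1 / (1 - s1)) with T in HC2 by (unfold s1; field; lra).
      rewrite <- HC2.
      + apply RInt_extR. intros y Hy. rewrite Rmin_left in Hy by lra. rewrite Rmax_right in Hy by lra.
        rewrite <- (Hint_subst a0 a1 a2 a b y) by (auto; lra). reflexivity.
      + intros x Hx. rewrite Rmin_left in Hx by lra. rewrite Rmax_right in Hx by lra.
        apply continuity_pt_filterlim. apply Hint_cont; auto.
        apply Rdiv_le_0_compat; lra.
      + intros x Hx. rewrite Rmin_left in Hx by lra. rewrite Rmax_right in Hx by lra.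
        split. apply Hg; auto.
        apply continuity_pt_filterlim. apply continuity_pt_inv.
        apply (continuity_pt_comp (fun x => 1 - x) (fun u => u ^ 2)).
        apply continuity_pt_minus. apply continuity_pt_const; intros u v; auto. apply continuity_pt_id.
        apply cont_pow_t. apply pow_nonzero; lra. }
    rewrite Hsub.
    pose proof (Kf_ex a0 a1 a2 a b Ha Hb) as Hex.
    rewrite <- (RInt_ChaslesR (Kf a0 a1 a2 a b) 0 s1 1).
    2: eapply ex_RInt_Chasles_1R; eauto; lra.
    2: eapply ex_RInt_Chasles_2R; eauto; lra.
    replace (RInt (Kf a0 a1 a2 a b) 0 s1 - (RInt (Kf a0 a1 a2 a b) 0 s1 + RInt (Kf a0 a1 a2 a b) s1 1))
      with (- RInt (Kf a0 a1 a2 a b) s1 1) by ring.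
    rewrite Rabs_Ropp.
    eapply Rle_lt_trans.
    apply abs_RInt_le_const with (M := C). lra.
    eapply ex_RInt_Chasles_2R; eauto; lra.
    intros t Ht. apply Kf_bound; auto; lra.
    replace (1 - s1) with (/ (1 + T)) by (unfold s1; field; lra).
    apply Rmult_lt_reg_l with (1 + T). lra.
    rewrite <- Rmult_assoc, Rinv_r, Rmult_1_l by lra.
    apply Rmult_lt_reg_r with (/ eps). apply Rinv_0_lt_compat; auto.
    rewrite Rmult_assoc, Rinv_r, Rmult_1_r by lra.
    assert (C * / eps = C / eps) by reflexivity. lra.
Qed.

Lemma Lmod_closed r s : 0 < s -> Lmod r s = RInt (fun t => t ^ r / Pf t s) 0 1.
Proof.
  intros Hs. unfold Lmod. pose proof (lohi3 s s Hs Hs).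
  assert (HI : inI (lo3 s s) (hi3 s s) (repeat 1 (S r) ++ [s])).
  { unfold inI. apply List.Forall_app; split. apply Forall_repeat, in3; auto.
    constructor; [apply in3; auto|constructor]. }
  rewrite (dd_ln (lo3 s s) (hi3 s s)); auto.
  2: { simpl. discriminate. }
  unfold Tln. rewrite <- RInt_scalR by (eapply PhiLn_ex; [apply H|exact HI]).
  apply RInt_extR. intros t Ht.
  rewrite Rmin_left in Ht by lra. rewrite Rmax_right in Ht by lra.
  assert (HL : length (repeat 1 (S r) ++ [s]) = (r + 2)%nat) by (rewrite length_app, repeat_length; simpl; lia).
  rewrite PhiLn_long by lia. rewrite HL.
  replace (r + 2 - 2)%nat with r by lia.
  rewrite prodP_app, prodP_repeat, Pf1, pow1. simpl (prodP t [s]).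
  rewrite pow_add. assert (E := neg1_sq r).
  assert (Pf t s <> 0) by (apply (Pf_ne0 t s s); lra).
  set (u := (-1) ^ r) in *.
  replace (u * (u * (-1) ^ 2 * t ^ r / (1 * (Pf t s * 1)))) with ((u * u) * (t ^ r / Pf t s)) by (field; auto).
  rewrite E. ring.
Qed.

Definition G r i j a' b' := RInt (fun t => - t ^ (r+1) * kap i a' t * kap j b' t) 0 1.

Lemma kap_cont' i z t : 0 < z -> 0 <= t <= 1 -> continuity_pt (fun t => kap i z t) t.
Proof. intros. apply kap_cont; auto. Qed.

Lemma G_ex r i j a' b' : 0 < a' -> 0 < b' -> ex_RInt (fun t => - t ^ (r+1) * kap i a' t * kap j b' t) 0 1.
Proof.
  intros. apply ex_RInt_cont01. intros t Ht.
  apply continuity_pt_mult; [apply continuity_pt_mult|]; auto using kap_cont.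
  apply continuity_pt_opp, cont_pow_t.
Qed.

Lemma g_eq r a' b' : 0 < a' -> 0 < b' -> a' <> b' ->
  (Lmod r b' - Lmod r a') / (b' - a') = G r 0 0 a' b'.
Proof.
  intros Ha Hb Hne. rewrite !Lmod_closed by auto.
  assert (Ea : ex_RInt (fun t => t ^ r / Pf t a') 0 1).
  { apply ex_RInt_cont01. intros t Ht. apply continuity_pt_div. apply cont_pow_t. apply cont_Pf.
    apply (Pf_ne0 t a' a'); lra. }
  assert (Eb : ex_RInt (fun t => t ^ r / Pf t b') 0 1).
  { apply ex_RInt_cont01. intros t Ht. apply continuity_pt_div. apply cont_pow_t. apply cont_Pf.
    apply (Pf_ne0 t b' b'); lra. }
  rewrite <- RInt_minusR by auto. match goal with |- ?A / ?B = _ => replace (A / B) with (/ B * A) by (unfold Rdiv; apply Rmult_comm) end. rewrite <- RInt_scalR by (apply ex_RInt_minusR; auto).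
  unfold G. apply RInt_extR. intros t Ht.
  rewrite Rmin_left in Ht by lra. rewrite Rmax_right in Ht by lra.
  assert (Pf t a' <> 0) by (apply (Pf_ne0 t a' a'); lra).
  assert (Pf t b' <> 0) by (apply (Pf_ne0 t b' b'); lra).
  unfold kap. simpl. rewrite pow_add. unfold Pf in *. field. repeat split; auto. intro; apply Hne; lra.
Qed.

Lemma kap_param (c : R -> R) Cc j z0 : 0 < z0 -> 0 <= Cc ->
  (forall t, 0 <= t <= 1 -> continuity_pt c t) -> (forall t, 0 <= t <= 1 -> Rabs (c t) <= Cc) ->
  derivable_pt_lim (fun z => RInt (fun t => c t * kap j z t) 0 1) z0 (RInt (fun t => c t * kap (S j) z0 t) 0 1).
Proof.
  intros Hz HC Hc Hcb.
  set (mn := Rmin 1 (z0/2)). assert (Hmn : 0 < mn) by (apply mn_pos; lra).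
  apply (param_deriv (fun z t => c t * kap j z t) (fun z t => c t * kap (S j) z t) z0 (z0/2)
    (Cc * (INR (fact (S (S j))) / mn ^ (S (S (S j)))))).
  - lra.
  - apply Rmult_le_pos; auto. apply Rdiv_le_0_compat. apply pos_INR. apply pow_lt; auto.
  - intros z t Hz' Ht. apply derivable_pt_lim_scal. apply kap_deriv. apply (Pf_ne0 t z (z0/2)); auto.
    unfold Rabs in Hz'; destruct Rcase_abs; lra.
  - intros z t Hz' Ht. rewrite <- Rmult_minus_distr_l, Rabs_mult, Rmult_assoc.
    apply Rmult_le_compat; try apply Rabs_pos; auto.
    apply (lip_of_deriv (fun z => kap (S j) z t) (fun z => kap (S (S j)) z t) (Rmin z z0) (Rmax z z0)).
    + intros c' Hc'. apply kap_deriv. apply (Pf_ne0 t c' (z0/2)); auto.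
      unfold Rmin, Rmax in Hc'; destruct Rle_dec; unfold Rabs in Hz'; destruct Rcase_abs; lra.
    + intros c' Hc'. apply kap_bound; auto.
      unfold Rmin, Rmax in Hc'; destruct Rle_dec; unfold Rabs in Hz'; destruct Rcase_abs; lra.
    + unfold Rmin, Rmax; destruct Rle_dec; lra.
    + unfold Rmin, Rmax; destruct Rle_dec; lra.
  - intros z Hz'. apply ex_RInt_cont01. intros t Ht. apply continuity_pt_mult; auto.
    apply kap_cont; auto. unfold Rabs in Hz'; destruct Rcase_abs; lra.
  - apply ex_RInt_cont01. intros t Ht. apply continuity_pt_mult; auto. apply kap_cont; auto.
Qed.

Lemma c_props r i a' : 0 < a' ->
  (forall t, 0 <= t <= 1 -> continuity_pt (fun t => - t ^ (r+1) * kap i a' t) t) /\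
  (forall t, 0 <= t <= 1 -> Rabs (- t ^ (r+1) * kap i a' t) <= INR (fact i) / Rmin 1 a' ^ S i).
Proof.
  intros Ha. split.
  - intros t Ht. apply continuity_pt_mult. apply continuity_pt_opp, cont_pow_t. apply kap_cont; auto.
  - intros t Ht. rewrite Rabs_mult, Rabs_Ropp, Rabs_pos_eq by (apply pow_le; lra).
    pose proof (kap_bound i a' t a' Ht ltac:(lra)).
    assert (t ^ (r+1) <= 1) by (apply pow_le1; lra). assert (0 <= t ^ (r+1)) by (apply pow_le; lra).
    pose proof (Rabs_pos (kap i a' t)). nra.
Qed.

Lemma G_deriv_b r i j a' b0 : 0 < a' -> 0 < b0 ->
  derivable_pt_lim (fun b' => G r i j a' b') b0 (G r i (S j) a' b0).
Proof.
  intros Ha Hb. destruct (c_props r i a' Ha) as [Hc Hcb].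
  assert (E : forall j b', G r i j a' b' = RInt (fun t => (- t ^ (r+1) * kap i a' t) * kap j b' t) 0 1).
  { intros. unfold G. reflexivity. }
  rewrite E. apply (derivable_local (fun b' => RInt (fun t => (- t ^ (r+1) * kap i a' t) * kap j b' t) 0 1)) with 1.
  lra. intros; symmetry; apply E.
  eapply kap_param; eauto. apply Rdiv_le_0_compat. apply pos_INR. apply pow_lt, mn_pos; auto.
Qed.

Lemma G_deriv_a r i j a0 b' : 0 < a0 -> 0 < b' ->
  derivable_pt_lim (fun a' => G r i j a' b') a0 (G r (S i) j a0 b').
Proof.
  intros Ha Hb. destruct (c_props r j b' Hb) as [Hc Hcb].
  assert (E : forall i a', G r i j a' b' = RInt (fun t => (- t ^ (r+1) * kap j b' t) * kap i a' t) 0 1).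
  { intros. unfold G. apply RInt_extR. intros; ring. }
  rewrite E. apply (derivable_local (fun a' => RInt (fun t => (- t ^ (r+1) * kap j b' t) * kap i a' t) 0 1)) with 1.
  lra. intros; symmetry; apply E.
  eapply kap_param; eauto. apply Rdiv_le_0_compat. apply pos_INR. apply pow_lt, mn_pos; auto.
Qed.

Lemma inner_Dn r a' b : 0 < a' -> 0 < b -> a' <> b -> forall j,
  Dn j (fun b' => (Lmod r b' - Lmod r a') / (b' - a')) b = G r 0 j a' b.
Proof.
  intros Ha Hb Hne j.
  destruct (Rlt_or_le a' b) as [Hlt|Hle].
  - apply (Dn_family _ (fun j b' => G r 0 j a' b') a' (b+1)).
    + intros x Hx. apply g_eq; lra.
    + intros j' x Hx. apply G_deriv_b; lra.
    + lra.
  - apply (Dn_family _ (fun j b' => G r 0 j a' b') 0 a').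
    + intros x Hx. apply g_eq; lra.
    + intros j' x Hx. apply G_deriv_b; lra.
    + lra.
Qed.

Lemma outer_Dn r a b i j : 0 < a -> 0 < b -> a <> b ->
  Dn i (fun a' => Dn j (fun b' => (Lmod r b' - Lmod r a') / (b' - a')) b) a = G r i j a b.
Proof.
  intros Ha Hb Hne.
  destruct (Rlt_or_le a b) as [Hlt|Hle].
  - apply (Dn_family _ (fun i a' => G r i j a' b) 0 b).
    + intros x Hx. apply inner_Dn; lra.
    + intros i' x Hx. apply G_deriv_a; lra.
    + lra.
  - apply (Dn_family _ (fun i a' => G r i j a' b) b (a+1)).
    + intros x Hx. apply inner_Dn; lra.
    + intros i' x Hx. apply G_deriv_a; lra.
    + lra.
Qed.

Lemma neg1_odd N : (-1) ^ (N + N + 1) = -1.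
Proof.
  rewrite !pow_add. rewrite neg1_sq. ring.
Qed.

Lemma V_G a0 a1 a2 a b : 0 < a -> 0 < b ->
  (-1) ^ (a0 + a1 + a2 + a0 + 1) / (INR (fact a1) * INR (fact a2)) * G a0 a1 a2 a b
  = RInt (Kf a0 a1 a2 a b) 0 1.
Proof.
  intros Ha Hb. unfold G. rewrite <- RInt_scalR by (apply G_ex; auto).
  apply RInt_extR. intros t Ht.
  rewrite Rmin_left in Ht by lra. rewrite Rmax_right in Ht by lra.
  assert (Pf t a <> 0) by (apply (Pf_ne0 t a a); lra).
  assert (Pf t b <> 0) by (apply (Pf_ne0 t b b); lra).
  pose proof (INR_fact_neq_0 a1). pose proof (INR_fact_neq_0 a2).
  unfold kap, Kf.
  replace (-t) with (-1 * t) by ring. rewrite !Rpow_mult_distr.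
  assert (Esign : (-1) ^ (a0 + a1 + a2 + a0 + 1) * (-1) ^ a1 * (-1) ^ a2 = -1).
  { rewrite <- !pow_add. replace (a0 + a1 + a2 + a0 + 1 + a1 + a2)%nat with ((a0+a1+a2) + (a0+a1+a2) + 1)%nat by lia.
    apply neg1_odd. }
  assert (Et : t ^ (a0 + 1) * t ^ a1 * t ^ a2 = t ^ (a0 + a1 + a2 + 1)).
  { rewrite <- !pow_add. f_equal. lia. }
  set (s := (-1) ^ (a0 + a1 + a2 + a0 + 1)) in *.
  set (p1 := (-1) ^ a1) in *. set (p2 := (-1) ^ a2) in *.
  rewrite <- Et.
  transitivity (- (s * p1 * p2) * (t ^ (a0 + 1) * t ^ a1 * t ^ a2) / (Pf t a ^ S a1 * Pf t b ^ S a2)).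
  { field. repeat split; auto; apply pow_nonzero; auto. }
  rewrite Esign. field. split; apply pow_nonzero; auto.
Qed.

Theorem mainTheorem16 :
  forall (a0 a1 a2 : nat) (a b : R), 0 < a -> 0 < b -> a <> b ->
  let V := (-1) ^ (a0 + a1 + a2 + 1) * dd (pts (S a0) a (S a1) b (S a2)) ln in
  improper_int0 (Hint a0 a1 a2 a b) V /\
  V = (-1) ^ (a0 + a1 + a2 + 1) * dd (pts a0 a (S a1) b (S a2)) L0 /\
  V = (-1) ^ (a0 + a1 + a2 + a0 + 1) / (INR (fact a1) * INR (fact a2)) *
      Dn a1 (fun a' => Dn a2 (fun b' => (Lmod a0 b' - Lmod a0 a') / (b' - a')) b) a /\
  improper_int0 (Hint a0 0 0 a b) (- ((Lmod a0 b - Lmod a0 a) / (b - a))).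
Proof.
  intros a0 a1 a2 a b Ha Hb Hab V.
  assert (HV : V = RInt (Kf a0 a1 a2 a b) 0 1) by (unfold V; apply V_ln; auto).
  split; [|split; [|split]].
  - rewrite HV. apply improper_K; auto.
  - rewrite HV, V_L0; auto.
  - rewrite HV, outer_Dn, V_G; auto.
  - replace (- ((Lmod a0 b - Lmod a0 a) / (b - a))) with (RInt (Kf a0 0 0 a b) 0 1).
    + apply improper_K; auto.
    + rewrite <- (V_G a0 0 0 a b Ha Hb). rewrite <- g_eq by auto.
      replace (a0 + 0 + 0 + a0 + 1)%nat with (a0 + a0 + 1)%nat by lia.
      rewrite neg1_odd. simpl. field. all: intro; apply Hab; lra.
Qed.
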